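(* Let $P,Q$ be Bio$\beta$ systems and $S,T$ Bio$\beta$ membranes with $P\equiv Q$ and $S\equiv T$. Then for all $\Gamma_1,\Gamma_2,\tau$: $\Gamma_1;\Gamma_2\vdash P:\tau$ if and only if $\Gamma_1;\Gamma_2\vdash Q:\tau$; and for all $\Delta_1,\Delta_2,\sigma$: $\Delta_1;\Delta_2\vdash S:\sigma$ if and only if $\Delta_1;\Delta_2\vdash T:\sigma$.
   Context: Bio$\beta$ syntax. Fix a protein signature: a finite set $\mathcal P=\mathcal P_p\cup\mathcal P_{ap}$ of protein names, partitioned into polar proteins $\mathcal P_p$ and apolar proteins $\mathcal P_{ap}$, with $s:\mathcal P\to\mathbb N$ giving the number of sites of each protein; fix a countably infinite set $\mathcal N$ of names. An interface is a finite map $\rho$ from sites (natural numbers) to $\mathcal N\cup\{h,v\}$ (visible $v$, hidden $h$, or tied to a name), written as a sum, e.g. $\rho=1+\bar2+3^x$ means $\rho(1)=v,\rho(2)=h,\rho(3)=x$. Let $fn(\rho)=\mathrm{im}(\rho)\cap\mathcal N$ and $|\rho,x|=|\{i:\rho(i)=x\}|$. Systems and membranes: $P::=\diamond\mid A_p(\rho)\mid [S]\{P\}\mid P*Q\mid \nu n.P\mid \mathsf p_n;P\mid \mathsf f_n;[S]\{P\}$ ($A_p\in\mathcal P_p$), $S::=\mathbf 0\mid A_{ap}(\rho)\mid S\star T\mid \mathsf p^\perp_n;S\mid \mathsf f^\perp_n$ ($A_{ap}\in\mathcal P_{ap}$), with $[S]\{P\}$ a compartment with membrane $S$ enclosing $P$,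 $\nu n$ a binder, and $\mathsf p_n,\mathsf p^\perp_n,\mathsf f_n,\mathsf f^\perp_n$ pinch/co-pinch/fuse/co-fuse actions. $fn(\cdot)$ is as usual (including subscripts of actions). $\mathrm{Act}=\{\mathsf p_n,\mathsf p^\perp_n,\mathsf f_n,\mathsf f^\perp_n\mid n\in\mathcal N\}$ with involution $(t_n)^\perp=t^\perp_n$, extended to sets pointwise; for $X\subseteq\mathcal N$, $\tau\restriction X=\{t_x\in\tau\mid x\in X\}$. $act(K)$, the set of actions occurring in $K$, is defined by: $\emptyset$ for $\diamond,\mathbf 0$, proteins; union over compartments and compositions; $act(\nu n.P)=act(P)$; $act(t_n;K)=\{t_n\}\cup act(K)$; $act(\mathsf f^\perp_n)=\{\mathsf f^\perp_n\}$. Structural equivalence $\equiv$ is the least equivalence containing $\alpha$-equivalence such that: $*$ and $\star$ are commutative and associative with units $\diamond$ and $\mathbf 0$; $\nu n.\nu m.P\equiv\nu m.\nu n.P$ ($n\ne m$); $\nu n.\diamond\equiv\diamond$; $\nu n.(P*Q)\equiv(\nu n.P)*Q$ if $n\notin fn(Q)$; $\nu n.[S]\{P\}\equiv[S]\{\nu n.P\}$ if $n\notin fn(S)$; $\nu n.(t_m;P)\equiv t_m;\nu n.P$ for $t\in\{\mathsf p,\mathsf f\}$, $n\neq m$; and $\equiv$ is preserved by $*$, $\star$, compartment formation, and prefixes $t_n;-$ for $t\in\{\mathsf p,\mathsf p^\perp,\mathsf f\}$. Type system. A type $\tau$ is a finite subset of $\mathrm{Act}$. Judgements have the form $\Gamma_1;\Gamma_2\vdash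 K:\tau$ with $\Gamma_1,\Gamma_2$ disjoint finite sets of names (a comma denotes disjoint union). Let $ok_e(\Gamma_1,\Gamma_2,\Delta_1,\Delta_2)$ iff $(\Gamma_1\cup\Gamma_2)\cap(\Delta_1\cup\Delta_2)=\emptyset$, and $ok_t(\Gamma,\tau,\sigma)$ iff $(\tau\restriction\Gamma)^\perp=\sigma\restriction\Gamma$. Rules: (empty) $\emptyset;\emptyset\vdash\diamond:\emptyset$ and $\emptyset;\emptyset\vdash\mathbf 0:\emptyset$. (prot) if $|\rho,x|\le2$ for all $x\in fn(\rho)$, then $\{x:|\rho,x|=1\};\{x:|\rho,x|=2\}\vdash A(\rho):\emptyset$. (action) for $t\in\{\mathsf p,\mathsf p^\perp,\mathsf f\}$, if $\Gamma_1;\Gamma_2\vdash K:\emptyset$ and $act(K)=\emptyset$ then $\Gamma_1,x;\Gamma_2\vdash t_x;K:\{t_x\}$. (co-f) $x;\emptyset\vdash\mathsf f^\perp_x:\{\mathsf f^\perp_x\}$. ($\nu$-prot) if $\Gamma_1;\Gamma_2\vdash P:\tau$, $x\notin\Gamma_1$, $\tau\restriction\{x\}=\emptyset$, then $\Gamma_1;\Gamma_2\setminus\{x\}\vdash\nu x.P:\tau$. ($\nu$-action) for $t\in\{\mathsf p,\mathsf f\}$, if $\Gamma_1;\Gamma_2,x\vdash P:\tau\cup\{t_x,t_x^\perp\}$ and $\{t_x,t^\perp_x\}\cap\tau=\emptyset$ then $\Gamma_1;\Gamma_2\vdash\nu x.P:\tau$. (par) for $op\in\{*,\star\}$, if $\Gamma_1,\Gamma;\Gamma_2\vdash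 K:\tau$, $\Delta_1,\Gamma;\Delta_2\vdash L:\sigma$, $ok_e(\Gamma_1,\Gamma_2,\Delta_1,\Delta_2)$ and $ok_t(\Gamma,\tau,\sigma)$, then $\Gamma_1,\Delta_1;\Gamma_2,\Delta_2,\Gamma\vdash K\,op\,L:\tau\cup\sigma$. (cell) if $\Gamma_1,\Gamma;\Gamma_2\vdash S:\tau$, $\Gamma;\Delta_2\vdash P:\sigma$, $ok_e(\Gamma_1,\Gamma_2,\emptyset,\Delta_2)$ and $ok_t(\Gamma,\tau,\sigma)$, then $\Gamma_1;\Gamma_2,\Delta_2,\Gamma\vdash[S]\{P\}:\tau\cup\sigma$. *)

(* Defs.v *)
From Stdlib Require Import List Arith.
Import ListNotations.

Inductive ival : Type := IV (* visible *) | IH (* hidden *) | IN (n : nat).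

(* An interface is a finite map from sites to N u {h,v}; site i is mapped to
   the i-th entry of the list (None = site not in the domain). *)
Definition iface := list (option ival).

Definition ifc_count (r : iface) (x : nat) : nat :=
  length (filter (fun o => match o with Some (IN y) => Nat.eqb y x | _ => false end) r).

Definition ifc_fn (r : iface) (x : nat) : Prop := In (Some (IN x)) r.

Definition swapn (a b x : nat) : nat :=
  if Nat.eqb x a then b else if Nat.eqb x b then a else x.
Definition swap_ival (a b : nat) (v : ival) : ival :=
  match v with IN n => IN (swapn a b n) | _ => v end.
Definition swap_iface (a b : nat) (r : iface) : iface :=
  map (option_map (swap_ival a b)) r.

(* Pp : polar protein names, Pap : apolar protein names. *)
Inductive mem (Pap : Type) : Type :=
| MNil
| MProt (A : Pap) (r : iface)
| MPar (S T : mem Pap)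
| MCoPinch (n : nat) (S : mem Pap)
| MCoFuse (n : nat).
Arguments MNil {Pap}.
Arguments MProt {Pap} A r.
Arguments MPar {Pap} S T.
Arguments MCoPinch {Pap} n S.
Arguments MCoFuse {Pap} n.

Inductive sys (Pp Pap : Type) : Type :=
| SNil
| SProt (A : Pp) (r : iface)
| SComp (S : mem Pap) (P : sys Pp Pap)
| SPar (P Q : sys Pp Pap)
| SNu (n : nat) (P : sys Pp Pap)
| SPinch (n : nat) (P : sys Pp Pap)
| SFuse (n : nat) (S : mem Pap) (P : sys Pp Pap).
Arguments SNil {Pp Pap}.
Arguments SProt {Pp Pap} A r.
Arguments SComp {Pp Pap} S P.
Arguments SPar {Pp Pap} P Q.
Arguments SNu {Pp Pap} n P.
Arguments SPinch {Pp Pap} n P.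
Arguments SFuse {Pp Pap} n S P.

Fixpoint mem_fn {Pap} (S : mem Pap) (x : nat) : Prop :=
  match S with
  | MNil => False
  | MProt _ r => ifc_fn r x
  | MPar S1 S2 => mem_fn S1 x \/ mem_fn S2 x
  | MCoPinch n S1 => x = n \/ mem_fn S1 x
  | MCoFuse n => x = n
  end.

Fixpoint sys_fn {Pp Pap} (P : sys Pp Pap) (x : nat) : Prop :=
  match P with
  | SNil => False
  | SProt _ r => ifc_fn r x
  | SComp M Q => mem_fn M x \/ sys_fn Q x
  | SPar P1 P2 => sys_fn P1 x \/ sys_fn P2 x
  | SNu n Q => x <> n /\ sys_fn Q x
  | SPinch n Q => x = n \/ sys_fn Q x
  | SFuse n M Q => x = n \/ mem_fn M x \/ sys_fn Q x
  end.

Fixpoint swap_mem {Pap} (a b : nat) (S : mem Pap) : mem Pap :=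
  match S with
  | MNil => MNil
  | MProt A r => MProt A (swap_iface a b r)
  | MPar S1 S2 => MPar (swap_mem a b S1) (swap_mem a b S2)
  | MCoPinch n S1 => MCoPinch (swapn a b n) (swap_mem a b S1)
  | MCoFuse n => MCoFuse (swapn a b n)
  end.

Fixpoint swap_sys {Pp Pap} (a b : nat) (P : sys Pp Pap) : sys Pp Pap :=
  match P with
  | SNil => SNil
  | SProt A r => SProt A (swap_iface a b r)
  | SComp M Q => SComp (swap_mem a b M) (swap_sys a b Q)
  | SPar P1 P2 => SPar (swap_sys a b P1) (swap_sys a b P2)
  | SNu n Q => SNu (swapn a b n) (swap_sys a b Q)
  | SPinch n Q => SPinch (swapn a b n) (swap_sys a b Q)
  | SFuse n M Q => SFuse (swapn a b n) (swap_mem a b M) (swap_sys a b Q)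
  end.

Inductive akind : Type := Kp | Kpp | Kf | Kfp.   (* p, p^perp, f, f^perp *)
Definition action : Type := (akind * nat)%type.
Definition dualk (k : akind) : akind :=
  match k with Kp => Kpp | Kpp => Kp | Kf => Kfp | Kfp => Kf end.
Definition dual (a : action) : action := (dualk (fst a), snd a).

Fixpoint act_mem {Pap} (S : mem Pap) (a : action) : Prop :=
  match S with
  | MNil => False
  | MProt _ _ => False
  | MPar S1 S2 => act_mem S1 a \/ act_mem S2 a
  | MCoPinch n S1 => a = (Kpp, n) \/ act_mem S1 a
  | MCoFuse n => a = (Kfp, n)
  end.

Fixpoint act_sys {Pp Pap} (P : sys Pp Pap) (a : action) : Prop :=
  match P with
  | SNil => False
  | SProt _ _ => False
  | SComp M Q => act_mem M a \/ act_sys Q a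
  | SPar P1 P2 => act_sys P1 a \/ act_sys P2 a
  | SNu _ Q => act_sys Q a
  | SPinch n Q => a = (Kp, n) \/ act_sys Q a
  | SFuse n M Q => a = (Kf, n) \/ act_mem M a \/ act_sys Q a
  end.

Inductive alpha_sys {Pp Pap} : sys Pp Pap -> sys Pp Pap -> Prop :=
| al_refl P : alpha_sys P P
| al_sym P Q : alpha_sys P Q -> alpha_sys Q P
| al_trans P Q R : alpha_sys P Q -> alpha_sys Q R -> alpha_sys P R
| al_rename n m P : ~ sys_fn (SNu n P) m ->
    alpha_sys (SNu n P) (SNu m (swap_sys n m P))
| al_comp S P P' : alpha_sys P P' -> alpha_sys (SComp S P) (SComp S P')
| al_par_l P P' Q : alpha_sys P P' -> alpha_sys (SPar P Q) (SPar P' Q)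
| al_par_r P Q Q' : alpha_sys Q Q' -> alpha_sys (SPar P Q) (SPar P Q')
| al_nu n P P' : alpha_sys P P' -> alpha_sys (SNu n P) (SNu n P')
| al_pinch n P P' : alpha_sys P P' -> alpha_sys (SPinch n P) (SPinch n P')
| al_fuse n S P P' : alpha_sys P P' -> alpha_sys (SFuse n S P) (SFuse n S P').

Inductive mequiv {Pap} : mem Pap -> mem Pap -> Prop :=
| me_refl S : mequiv S S
| me_sym S T : mequiv S T -> mequiv T S
| me_trans S T U : mequiv S T -> mequiv T U -> mequiv S U
| me_comm S T : mequiv (MPar S T) (MPar T S)
| me_assoc S T U : mequiv (MPar (MPar S T) U) (MPar S (MPar T U))
| me_unit S : mequiv (MPar S MNil) S
| me_par_l S S' T : mequiv S S' -> mequiv (MPar S T) (MPar S' T)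
| me_par_r S T T' : mequiv T T' -> mequiv (MPar S T) (MPar S T')
| me_copinch n S S' : mequiv S S' -> mequiv (MCoPinch n S) (MCoPinch n S').

Inductive sequiv {Pp Pap} : sys Pp Pap -> sys Pp Pap -> Prop :=
| se_refl P : sequiv P P
| se_sym P Q : sequiv P Q -> sequiv Q P
| se_trans P Q R : sequiv P Q -> sequiv Q R -> sequiv P R
| se_alpha P Q : alpha_sys P Q -> sequiv P Q
| se_comm P Q : sequiv (SPar P Q) (SPar Q P)
| se_assoc P Q R : sequiv (SPar (SPar P Q) R) (SPar P (SPar Q R))
| se_unit P : sequiv (SPar P SNil) P
| se_nu_nu n m P : n <> m -> sequiv (SNu n (SNu m P)) (SNu m (SNu n P))
| se_nu_nil n : sequiv (SNu n SNil) SNil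
| se_nu_par n P Q : ~ sys_fn Q n -> sequiv (SNu n (SPar P Q)) (SPar (SNu n P) Q)
| se_nu_comp n S P : ~ mem_fn S n -> sequiv (SNu n (SComp S P)) (SComp S (SNu n P))
| se_nu_pinch n m P : n <> m -> sequiv (SNu n (SPinch m P)) (SPinch m (SNu n P))
| se_nu_fuse n m S P : n <> m -> ~ mem_fn S n ->
    sequiv (SNu n (SFuse m S P)) (SFuse m S (SNu n P))
| se_par_l P P' Q : sequiv P P' -> sequiv (SPar P Q) (SPar P' Q)
| se_par_r P Q Q' : sequiv Q Q' -> sequiv (SPar P Q) (SPar P Q')
| se_comp S S' P P' : mequiv S S' -> sequiv P P' -> sequiv (SComp S P) (SComp S' P')
| se_pinch n P P' : sequiv P P' -> sequiv (SPinch n P) (SPinch n P')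
| se_fuse n S S' P P' : sequiv (SComp S P) (SComp S' P') ->
    sequiv (SFuse n S P) (SFuse n S' P').

(* ---------- finite sets as predicates (set equality = extensional) ---------- *)
Definition nset := nat -> Prop.
Definition tset := action -> Prop.
Definition emp {A : Type} : A -> Prop := fun _ => False.
Definition single {A : Type} (x : A) : A -> Prop := fun y => y = x.
Definition union {A : Type} (X Y : A -> Prop) : A -> Prop := fun a => X a \/ Y a.
Definition seteq {A : Type} (X Y : A -> Prop) : Prop := forall a, X a <-> Y a.
Definition disj {A : Type} (X Y : A -> Prop) : Prop := forall a, X a -> Y a -> False.

Definition restr (t : tset) (X : nset) : tset := fun a => t a /\ X (snd a).
Definition perp (t : tset) : tset := fun a => t (dual a).

Definition ok_e (G1 G2 D1 D2 : nset) : Prop := disj (union G1 G2) (union D1 D2).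
Definition ok_t (G : nset) (t s : tset) : Prop := seteq (perp (restr t G)) (restr s G).

(* ---------- the type system ----------
   typ_mem G1 G2 S T  :  G1;G2 |- S : T     (membranes)
   typ_sys G1 G2 P T  :  G1;G2 |- P : T     (systems)
   Conclusion contexts/types are given up to set equality; a comma
   (disjoint union) generates a disjointness side condition.            *)
Inductive typ_mem {Pap : Type} : nset -> nset -> mem Pap -> tset -> Prop :=
| tm_empty G1 G2 T :
    seteq G1 emp -> seteq G2 emp -> seteq T emp -> typ_mem G1 G2 MNil T
| tm_prot A r G1 G2 T :
    (forall x, ifc_fn r x -> ifc_count r x <= 2) ->
    seteq G1 (fun x => ifc_count r x = 1) ->
    seteq G2 (fun x => ifc_count r x = 2) ->
    seteq T emp -> typ_mem G1 G2 (MProt A r) T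
| tm_copinch x S G1 G2 G1' G2' T :
    typ_mem G1 G2 S emp -> (forall a, ~ act_mem S a) ->
    ~ G1 x -> ~ G2 x ->
    seteq G1' (union G1 (single x)) -> seteq G2' G2 -> seteq T (single (Kpp, x)) ->
    typ_mem G1' G2' (MCoPinch x S) T
| tm_cofuse x G1 G2 T :
    seteq G1 (single x) -> seteq G2 emp -> seteq T (single (Kfp, x)) ->
    typ_mem G1 G2 (MCoFuse x) T
| tm_par G1 G G2 D1 D2 S T t s C1 C2 U :
    typ_mem (union G1 G) G2 S t -> typ_mem (union D1 G) D2 T s ->
    disj G1 G -> disj D1 G ->
    ok_e G1 G2 D1 D2 -> ok_t G t s ->
    disj G1 D1 -> disj G2 D2 -> disj G2 G -> disj D2 G ->
    seteq C1 (union G1 D1) -> seteq C2 (union G2 (union D2 G)) -> seteq U (union t s) ->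
    typ_mem C1 C2 (MPar S T) U.

Inductive typ_sys {Pp Pap : Type} : nset -> nset -> sys Pp Pap -> tset -> Prop :=
| ts_empty G1 G2 T :
    seteq G1 emp -> seteq G2 emp -> seteq T emp -> typ_sys G1 G2 SNil T
| ts_prot A r G1 G2 T :
    (forall x, ifc_fn r x -> ifc_count r x <= 2) ->
    seteq G1 (fun x => ifc_count r x = 1) ->
    seteq G2 (fun x => ifc_count r x = 2) ->
    seteq T emp -> typ_sys G1 G2 (SProt A r) T
| ts_pinch x P G1 G2 G1' G2' T :
    typ_sys G1 G2 P emp -> (forall a, ~ act_sys P a) ->
    ~ G1 x -> ~ G2 x ->
    seteq G1' (union G1 (single x)) -> seteq G2' G2 -> seteq T (single (Kp, x)) ->
    typ_sys G1' G2' (SPinch x P) T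
| ts_fuse x S P G1 G2 G1' G2' T :
    typ_sys G1 G2 (SComp S P) emp -> (forall a, ~ act_sys (SComp S P) a) ->
    ~ G1 x -> ~ G2 x ->
    seteq G1' (union G1 (single x)) -> seteq G2' G2 -> seteq T (single (Kf, x)) ->
    typ_sys G1' G2' (SFuse x S P) T
| ts_nuprot x P G1 G2 t G1' G2' T :
    typ_sys G1 G2 P t -> ~ G1 x -> seteq (restr t (single x)) emp ->
    seteq G1' G1 -> seteq G2' (fun y => G2 y /\ y <> x) -> seteq T t ->
    typ_sys G1' G2' (SNu x P) T
| ts_nuact k x P G1 G2 t G1' G2' T :
    (k = Kp \/ k = Kf) ->
    typ_sys G1 (union G2 (single x)) P (union t (union (single (k, x)) (single (dual (k, x))))) ->
    ~ G2 x -> ~ t (k, x) -> ~ t (dual (k, x)) ->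
    seteq G1' G1 -> seteq G2' G2 -> seteq T t ->
    typ_sys G1' G2' (SNu x P) T
| ts_par G1 G G2 D1 D2 P Q t s C1 C2 U :
    typ_sys (union G1 G) G2 P t -> typ_sys (union D1 G) D2 Q s ->
    disj G1 G -> disj D1 G ->
    ok_e G1 G2 D1 D2 -> ok_t G t s ->
    disj G1 D1 -> disj G2 D2 -> disj G2 G -> disj D2 G ->
    seteq C1 (union G1 D1) -> seteq C2 (union G2 (union D2 G)) -> seteq U (union t s) ->
    typ_sys C1 C2 (SPar P Q) U
| ts_cell G1 G G2 D2 S P t s C1 C2 U :
    typ_mem (union G1 G) G2 S t -> typ_sys G D2 P s ->
    disj G1 G ->
    ok_e G1 G2 emp D2 -> ok_t G t s ->
    disj G2 D2 -> disj G2 G -> disj D2 G ->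
    seteq C1 G1 -> seteq C2 (union G2 (union D2 G)) -> seteq U (union t s) ->
    typ_sys C1 C2 (SComp S P) U.

(* Main.v *)
Require Import Defs.
From Stdlib Require Import List Arith Lia Classical FunctionalExtensionality PropExtensionality.


Lemma ext {A : Type} (X Y : A -> Prop) : seteq X Y -> X = Y.
Proof. intro H. apply functional_extensionality; intro a. apply propositional_extensionality. apply H. Qed.

Lemma dual_dual a : dual (dual a) = a.
Proof. destruct a as [[] n]; reflexivity. Qed.

Lemma snd_dual a : snd (dual a) = snd a.
Proof. reflexivity. Qed.

Lemma dual_neq k x : (k, x) <> dual (k, x).
Proof. destruct k; discriminate. Qed.

Ltac sunfold := unfold ok_t, ok_e, seteq, union, single, emp, disj, restr, perp, ok_t, ok_e in *.

Lemma typ_sys_conv {Pp Pap} A B (P : sys Pp Pap) t A' B' t' :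
  typ_sys A B P t -> seteq A A' -> seteq B B' -> seteq t t' -> typ_sys A' B' P t'.
Proof. intros H h1 h2 h3. apply ext in h1, h2, h3. subst. exact H. Qed.
Lemma typ_mem_conv {Pap} A B (P : mem Pap) t A' B' t' :
  typ_mem A B P t -> seteq A A' -> seteq B B' -> seteq t t' -> typ_mem A' B' P t'.
Proof. intros H h1 h2 h3. apply ext in h1, h2, h3. subst. exact H. Qed.

Lemma seteq_refl {A} (X : A -> Prop) : seteq X X. Proof. unfold seteq; tauto. Qed.


Definition INV (G1 G2 : nset) (t : tset) : Prop :=
 disj G1 G2 /\
 (forall a, t a -> G1 (snd a) \/ G2 (snd a)) /\
 (forall a b, t a -> t b -> snd a = snd b -> G1 (snd a) -> a = b) /\
 (forall a b c, t a -> t b -> t c -> snd a = snd b -> snd b = snd c -> a = b \/ a = c \/ b = c).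

Lemma count_fn r x : ifc_count r x <> 0 -> ifc_fn r x.
Proof.
  unfold ifc_count, ifc_fn. induction r as [|o r IH]; simpl; [tauto|].
  destruct o as [[| |y]|]; simpl; auto.
  destruct (Nat.eqb_spec y x); subst; simpl; auto.
Qed.

Ltac substext := repeat match goal with
  | H : seteq ?X _ |- _ => is_var X; apply ext in H; subst X
  end.

Ltac dsolve := sunfold; firstorder.

Lemma INV_par G1 G G2 D1 D2 t s :
  INV (union G1 G) G2 t -> INV (union D1 G) D2 s ->
  disj G1 G -> disj D1 G -> ok_e G1 G2 D1 D2 -> ok_t G t s ->
  disj G1 D1 -> disj G2 D2 -> disj G2 G -> disj D2 G ->
  INV (union G1 D1) (union G2 (union D2 G)) (union t s).
Proof.
  intros [I1 [I2 [I3 I4]]] [J1 [J2 [J3 J4]]] d1 d2 oe ot d3 d4 d5 d6.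
  assert (Hboth : forall a b, t a -> s b -> snd a = snd b -> G (snd a)).
  { intros a b ta sb e. destruct (I2 a ta) as [[h|h]|h]; destruct (J2 b sb) as [[h'|h']|h'];
    rewrite <- ?e in *; clear -h h' d1 d2 oe ot d3 d4 d5 d6; dsolve. }
  split; [|split; [|split]].
  - clear -I1 J1 oe d1 d2 d3 d4 d5 d6. dsolve.
  - intros a [ta|sa]; [destruct (I2 a ta)|destruct (J2 a sa)]; clear -H; dsolve.
  - intros a b [ta|sa] [tb|sb] e h.
    + apply I3; auto. unfold union in h. destruct h as [h|h]; [left; exact h|]. exfalso. destruct (I2 a ta) as [[h'|h']|h']; clear -h h' d2 d3 oe; dsolve.
    + exfalso. pose proof (Hboth a b ta sb e). clear -H h d1 d2; dsolve.
    + exfalso. pose proof (Hboth b a tb sa (eq_sym e)). rewrite e in h. clear -H h d1 d2; dsolve.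
    + apply J3; auto. unfold union in h. destruct h as [h|h]; [|left; exact h]. exfalso. destruct (J2 a sa) as [[h'|h']|h']; clear -h h' d1 d3 oe; dsolve.
  - intros a b c [ta|sa] [tb|sb] [tc|sc] e1 e2;
    try (apply I4; auto; fail); try (apply J4; auto; fail);
    try (left; apply I3; auto; try congruence; pose proof (Hboth b c tb sc e2); unfold union; right; congruence);
    try (right; left; apply I3; auto; try congruence; pose proof (Hboth c b tc sb (eq_sym e2)); unfold union; right; congruence);
    try (right; right; apply J3; auto; try congruence; pose proof (Hboth a b ta sb e1); unfold union; right; congruence);
    try (right; right; apply I3; auto; try congruence; pose proof (Hboth b a tb sa (eq_sym e1)); unfold union; right; congruence);
    try (right; left; apply J3; auto; try congruence; pose proof (Hboth b a tb sa (eq_sym e1)); unfold union; right; congruence);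
    try (left; apply J3; auto; try congruence; pose proof (Hboth c a tc sa (eq_sym (eq_trans e1 e2))); unfold union; right; congruence).
Qed.

Lemma union_emp_l {A} (X : A -> Prop) : union emp X = X.
Proof. apply ext. sunfold. tauto. Qed.
Lemma union_emp_r {A} (X : A -> Prop) : union X emp = X.
Proof. apply ext. sunfold. tauto. Qed.

Lemma INV_cell G1 G G2 D2 t s :
  INV (union G1 G) G2 t -> INV G D2 s ->
  disj G1 G -> ok_e G1 G2 emp D2 -> ok_t G t s ->
  disj G2 D2 -> disj G2 G -> disj D2 G ->
  INV G1 (union G2 (union D2 G)) (union t s).
Proof.
  intros. rewrite <- (union_emp_r G1). apply INV_par with (G := G); rewrite ?union_emp_r, ?union_emp_l; auto;
  dsolve.
Qed.

Lemma INV_single G1 G2 k x : disj G1 G2 -> ~ G2 x ->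
  INV (union G1 (single x)) G2 (single (k, x)).
Proof.
  intros d n. unfold INV. split; [|split;[|split]]; intros; dsolve; subst; cbn; auto.
Qed.

Lemma INV_emp G1 G2 : disj G1 G2 -> INV G1 G2 emp.
Proof. intros d. unfold INV. dsolve. Qed.

Lemma typ_mem_wf {Pap} G1 G2 (S : mem Pap) t : typ_mem G1 G2 S t ->
  INV G1 G2 t /\ (forall x, G1 x \/ G2 x -> mem_fn S x) /\ (forall a, t a -> act_mem S a).
Proof.
  induction 1; substext.
  - split; [apply INV_emp|]; dsolve.
  - split; [apply INV_emp|split]; simpl.
    + intros y h1 h2. rewrite h1 in h2. discriminate.
    + intros y [h|h]; apply count_fn; rewrite h; discriminate.
    + dsolve.
  - destruct IHtyp_mem as [[I1 _] [F _]]. split; [apply INV_single; auto|split]; simpl.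
    + intros y [[h|h]|h]; unfold single in *; auto.
    + intros a h. unfold single in h. auto.
  - split; [|split]; simpl.
    + rewrite <- (union_emp_l (single x)). apply INV_single; dsolve.
    + intros y [h|h]; dsolve.
    + dsolve.
  - destruct IHtyp_mem1 as [I1 [F1 A1]]. destruct IHtyp_mem2 as [I2 [F2 A2]].
    split; [apply INV_par; auto|split]; simpl.
    + unfold union. intros y [[h|h]|[h|[h|h]]]; [left; apply F1; left; left|right; apply F2; left; left|left;apply F1; right|right;apply F2; right|left;apply F1; left; right]; exact h.
    + intros a [h|h]; auto.
Qed.



Lemma typ_sys_wf {Pp Pap} G1 G2 (P : sys Pp Pap) t : typ_sys G1 G2 P t ->
  INV G1 G2 t /\ (forall x, G1 x \/ G2 x -> sys_fn P x) /\ (forall a, t a -> act_sys P a).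
Proof.
  induction 1; substext.
  - split; [apply INV_emp|]; dsolve.
  - split; [apply INV_emp|split]; simpl.
    + intros y h1 h2. rewrite h1 in h2. discriminate.
    + intros y [h|h]; apply count_fn; rewrite h; discriminate.
    + dsolve.
  - destruct IHtyp_sys as [[I1 _] [F _]]. split; [apply INV_single; auto|split]; simpl.
    + intros y [[h|h]|h]; unfold single in *; auto.
    + intros a h. unfold single in h. auto.
  - destruct IHtyp_sys as [[I1 _] [F _]]. split; [apply INV_single; auto|split]; simpl.
    + intros y [[h|h]|h]; unfold single in *; auto.
      * destruct (F y (or_introl h)); auto.
      * destruct (F y (or_intror h)); auto.
    + intros a h. unfold single in h. auto.
  - destruct IHtyp_sys as [[I1 [I2 [I3 I4]]] [F A]]. split; [|split]; simpl.
    + unfold INV. split; [|split; [|split]]; auto.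
      * dsolve.
      * intros a ta. destruct (I2 a ta); auto. right. split; auto. intro e.
        apply (proj1 (H1 a)). unfold restr, single. auto.
    + intros y [h|[h h']]; split; auto.
      * intro e; subst; auto.
    + auto.
  - destruct IHtyp_sys as [[I1 [I2 [I3 I4]]] [F A]]. split; [|split]; simpl.
    + unfold INV. split; [|split; [|split]].
      * dsolve.
      * intros a ta. destruct (I2 a (or_introl ta)) as [h|[h|h]]; auto. exfalso.
        unfold single in h. destruct a as [k' y]. simpl in h. subst y.
        destruct (I4 (k', x) (k, x) (dual (k, x))) as [e|[e|e]]; unfold union, single; auto.
        -- rewrite <- e in H2. auto.
        -- rewrite <- e in H3. auto.
        -- apply (dual_neq k x e).
      * intros a b ha hb e h. apply I3; unfold union; auto.
      * intros a b c ha hb hc e1 e2. apply I4; unfold union; auto.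
    + intros y [h|h]; split.
      * intro e; subst. apply (I1 x); unfold union, single; auto.
      * apply F; auto.
      * intro e; subst. auto.
      * apply F. unfold union; auto.
    + intros a h. apply A. unfold union; auto.
  - destruct IHtyp_sys1 as [I1 [F1 A1]]. destruct IHtyp_sys2 as [I2 [F2 A2]].
    split; [apply INV_par; auto|split]; simpl.
    + unfold union. intros y [[h|h]|[h|[h|h]]]; [left; apply F1; left; left|right; apply F2; left; left|left;apply F1; right|right;apply F2; right|left;apply F1; left; right]; exact h.
    + intros a [h|h]; auto.
  - destruct IHtyp_sys as [I2 [F2 A2]]. destruct (typ_mem_wf _ _ _ _ H) as [I1 [F1 A1]].
    split; [apply INV_cell; auto|split]; simpl.
    + unfold union. intros y [h|[h|[h|h]]]; [left; apply F1; left; left|left; apply F1; right|right;apply F2; right|right;apply F2; left]; exact h.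
    + intros a [h|h]; auto.
Qed.


Ltac swcase := unfold swapn; repeat (match goal with |- context [Nat.eqb ?u ?v] => is_var u; is_var v; destruct (Nat.eqb_spec u v) end; cbn in *); subst; try lia; try congruence.

Lemma swapn_inv a b x : swapn a b (swapn a b x) = x.
Proof. swcase. Qed.

Lemma swapn_eq a b x y : swapn a b y = x <-> y = swapn a b x.
Proof. split; intro h; subst; rewrite swapn_inv; auto. Qed.

Lemma swapn_comm a b x : swapn a b x = swapn b a x.
Proof. swcase. Qed.

Lemma swapn_same a x : swapn a a x = x.
Proof. swcase. Qed.

Lemma swapn_other a b x : x <> a -> x <> b -> swapn a b x = x.
Proof. swcase. Qed.

Lemma swapn_a a b : swapn a b a = b.
Proof. unfold swapn. rewrite Nat.eqb_refl. auto. Qed.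

Lemma count_swap a b r x : ifc_count (swap_iface a b r) x = ifc_count r (swapn a b x).
Proof.
  unfold ifc_count, swap_iface. induction r as [|o r IH]; simpl; auto.
  destruct o as [[| |y]|]; simpl; auto.
  destruct (Nat.eqb_spec (swapn a b y) x); destruct (Nat.eqb_spec y (swapn a b x)); simpl;
  try rewrite IH; auto; exfalso; apply swapn_eq in e; auto.
Qed.

Lemma ifc_fn_swap a b r x : ifc_fn (swap_iface a b r) x <-> ifc_fn r (swapn a b x).
Proof.
  unfold ifc_fn, swap_iface. induction r as [|o r IH]; simpl; [tauto|].
  rewrite IH. destruct o as [[| |y]|]; simpl; split; intros [h|h]; auto; try discriminate.
  - left. inversion h. rewrite swapn_inv. auto.
  - left. inversion h. subst. rewrite swapn_inv. auto.
Qed.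

Lemma mem_fn_swap {Pap} a b (S : mem Pap) x : mem_fn (swap_mem a b S) x <-> mem_fn S (swapn a b x).
Proof.
  induction S as [|A r|S1 IHS1 S2 IHS2|n S IHS|n]; simpl.
  - tauto.
  - apply ifc_fn_swap.
  - rewrite IHS1, IHS2. tauto.
  - rewrite IHS, swapn_eq. tauto.
  - rewrite swapn_eq. tauto.
Qed.

Lemma sys_fn_swap {Pp Pap} a b (P : sys Pp Pap) x : sys_fn (swap_sys a b P) x <-> sys_fn P (swapn a b x).
Proof.
  induction P as [|A r|M P IHP|P1 IHP1 P2 IHP2|n P IHP|n P IHP|n M P IHP]; simpl.
  - tauto.
  - apply ifc_fn_swap.
  - rewrite mem_fn_swap, IHP. tauto.
  - rewrite IHP1, IHP2. tauto.
  - rewrite IHP, swapn_eq. tauto.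
  - rewrite IHP, swapn_eq. tauto.
  - rewrite IHP, mem_fn_swap, swapn_eq. tauto.
Qed.

Lemma pair_eq_swap a b (k k' : akind) x y : (k, y) = (k', swapn a b x) <-> (k, swapn a b y) = (k', x).
Proof. split; intro h; inversion h; subst; rewrite ?swapn_inv; auto. Qed.

Lemma act_mem_swap {Pap} a b (S : mem Pap) p : act_mem (swap_mem a b S) p <-> act_mem S (fst p, swapn a b (snd p)).
Proof.
  destruct p as [k y]. simpl. induction S as [|A r|S1 IHS1 S2 IHS2|n S IHS|n]; simpl.
  - tauto.
  - tauto.
  - rewrite IHS1, IHS2. tauto.
  - rewrite IHS, pair_eq_swap. tauto.
  - rewrite pair_eq_swap. tauto.
Qed.

Lemma act_sys_swap {Pp Pap} a b (P : sys Pp Pap) p : act_sys (swap_sys a b P) p <-> act_sys P (fst p, swapn a b (snd p)).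
Proof.
  destruct p as [k y]. simpl. induction P as [|A r|M P IHP|P1 IHP1 P2 IHP2|n P IHP|n P IHP|n M P IHP]; simpl.
  - tauto.
  - tauto.
  - rewrite act_mem_swap, IHP. simpl. tauto.
  - rewrite IHP1, IHP2. tauto.
  - exact IHP.
  - rewrite IHP, pair_eq_swap. tauto.
  - rewrite IHP, act_mem_swap, pair_eq_swap. simpl. tauto.
Qed.

Definition sw (a b : nat) (X : nset) : nset := fun y => X (swapn a b y).
Definition swt (a b : nat) (t : tset) : tset := fun p => t (fst p, swapn a b (snd p)).

Lemma sw_single a b x : sw a b (single x) = single (swapn a b x).
Proof. apply ext. unfold sw, single. intro y. apply swapn_eq. Qed.

Lemma swt_single a b k x : swt a b (single (k, x)) = single (k, swapn a b x).
Proof. apply ext. unfold swt, single. intros [k' y]. simpl. rewrite pair_eq_swap; tauto. Qed.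

Lemma sw_disj a b X Y : disj X Y -> disj (sw a b X) (sw a b Y).
Proof. unfold disj, sw. eauto. Qed.

Lemma sw_ok_e a b G1 G2 D1 D2 : ok_e G1 G2 D1 D2 -> ok_e (sw a b G1) (sw a b G2) (sw a b D1) (sw a b D2).
Proof. unfold ok_e, disj, sw, union. eauto. Qed.

Lemma sw_ok_t a b G t s : ok_t G t s -> ok_t (sw a b G) (swt a b t) (swt a b s).
Proof. unfold ok_t, seteq, sw, swt, perp, restr. intros h [k y]. apply (h (k, swapn a b y)). Qed.

Lemma sw_emp a b : sw a b emp = emp. Proof. reflexivity. Qed.
Lemma swt_emp a b : swt a b emp = emp. Proof. reflexivity. Qed.

Lemma noact_mem_swap {Pap} a b (S : mem Pap) : (forall p, ~ act_mem S p) -> forall p, ~ act_mem (swap_mem a b S) p.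
Proof. intros h p. rewrite act_mem_swap. apply h. Qed.
Lemma noact_sys_swap {Pp Pap} a b (P : sys Pp Pap) : (forall p, ~ act_sys P p) -> forall p, ~ act_sys (swap_sys a b P) p.
Proof. intros h p. rewrite act_sys_swap. apply h. Qed.

Lemma typ_mem_swap {Pap} a b G1 G2 (S : mem Pap) t : typ_mem G1 G2 S t ->
  typ_mem (sw a b G1) (sw a b G2) (swap_mem a b S) (swt a b t).
Proof.
  induction 1; substext; simpl.
  - apply tm_empty; apply seteq_refl.
  - apply tm_prot.
    + intros y h. rewrite count_swap. apply H. apply ifc_fn_swap. auto.
    + intro y. unfold sw. rewrite count_swap. tauto.
    + intro y. unfold sw. rewrite count_swap. tauto.
    + apply seteq_refl.
  - eapply tm_copinch with (G1 := sw a b G1) (G2 := sw a b G2); eauto.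
    + apply noact_mem_swap. auto.
    + unfold sw. rewrite swapn_inv. auto.
    + unfold sw. rewrite swapn_inv. auto.
    + unfold sw, union, single, seteq. intro y. rewrite swapn_eq. tauto.
    + apply seteq_refl.
    + rewrite swt_single. apply seteq_refl.
  - apply tm_cofuse; rewrite ?sw_single, ?swt_single; apply seteq_refl.
  - eapply tm_par with (G1 := sw a b G1) (G := sw a b G) (D1 := sw a b D1); eauto using sw_disj, sw_ok_e, sw_ok_t;
    apply seteq_refl.
Qed.

Lemma typ_sys_swap {Pp Pap} a b G1 G2 (P : sys Pp Pap) t : typ_sys G1 G2 P t ->
  typ_sys (sw a b G1) (sw a b G2) (swap_sys a b P) (swt a b t).
Proof.
  induction 1; substext; simpl.
  - apply ts_empty; apply seteq_refl.
  - apply ts_prot.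
    + intros y h. rewrite count_swap. apply H. apply ifc_fn_swap. auto.
    + intro y. unfold sw. rewrite count_swap. tauto.
    + intro y. unfold sw. rewrite count_swap. tauto.
    + apply seteq_refl.
  - eapply ts_pinch with (G1 := sw a b G1) (G2 := sw a b G2); eauto.
    + apply noact_sys_swap. auto.
    + unfold sw. rewrite swapn_inv. auto.
    + unfold sw. rewrite swapn_inv. auto.
    + unfold sw, union, single, seteq. intro y. rewrite swapn_eq. tauto.
    + apply seteq_refl.
    + rewrite swt_single. apply seteq_refl.
  - eapply ts_fuse with (G1 := sw a b G1) (G2 := sw a b G2); eauto.
    + apply (noact_sys_swap a b _ H0).
    + unfold sw. rewrite swapn_inv. auto.
    + unfold sw. rewrite swapn_inv. auto.
    + unfold sw, union, single, seteq. intro y. rewrite swapn_eq. tauto.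
    + apply seteq_refl.
    + rewrite swt_single. apply seteq_refl.
  - eapply ts_nuprot with (G1 := sw a b G1) (G2 := sw a b G2); eauto.
    + unfold sw. rewrite swapn_inv. auto.
    + unfold seteq, restr, swt, single, emp in *. intros [k y]. simpl. rewrite <- (swapn_eq a b x y).
      apply (H1 (k, swapn a b y)).
    + apply seteq_refl.
    + unfold seteq, sw. intro y. rewrite swapn_eq. tauto.
    + apply seteq_refl.
  - eapply ts_nuact with (k := k) (G1 := sw a b G1) (G2 := sw a b G2) (t := swt a b t); eauto.
    + eapply typ_sys_conv; [exact IHtyp_sys | | |].
      * apply seteq_refl.
      * unfold seteq, sw, union, single. intro y. rewrite swapn_eq. tauto.
      * intros [k' y]. unfold swt, union, single, dual. simpl. rewrite !(pair_eq_swap a b). tauto.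
    + unfold sw. rewrite swapn_inv. auto.
    + unfold swt. simpl. rewrite swapn_inv. auto.
    + unfold swt. simpl. rewrite swapn_inv. auto.
    + apply seteq_refl.
    + apply seteq_refl.
    + apply seteq_refl.
  - eapply ts_par with (G1 := sw a b G1) (G := sw a b G) (D1 := sw a b D1); eauto using sw_disj, sw_ok_e, sw_ok_t;
    apply seteq_refl.
  - eapply ts_cell with (G1 := sw a b G1) (G := sw a b G); eauto using sw_disj, sw_ok_e, sw_ok_t;
    try apply seteq_refl.
    + exact (typ_mem_swap a b _ _ _ _ H).
    + change (@emp nat) with (sw a b emp). apply sw_ok_e. auto.
Qed.


Definition PAR (x1 x2 : nset) (tx : tset) (y1 y2 : nset) (ty : tset) (z1 z2 : nset) (tz : tset) : Prop :=
 exists G1 G D1, x1 = union G1 G /\ y1 = union D1 G /\ disj G1 G /\ disj D1 G /\ ok_e G1 x2 D1 y2 /\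
   ok_t G tx ty /\ disj G1 D1 /\ disj x2 y2 /\ disj x2 G /\ disj y2 G /\
   z1 = union G1 D1 /\ z2 = union x2 (union y2 G) /\ tz = union tx ty.

Definition WF (x1 x2 : nset) (tx : tset) : Prop :=
  disj x1 x2 /\ (forall a, tx a -> x1 (snd a) \/ x2 (snd a)).

Lemma par_sys_iff {Pp Pap} z1 z2 (P Q : sys Pp Pap) tz :
  typ_sys z1 z2 (SPar P Q) tz <-> exists x1 x2 tx y1 y2 ty,
    typ_sys x1 x2 P tx /\ typ_sys y1 y2 Q ty /\ PAR x1 x2 tx y1 y2 ty z1 z2 tz.
Proof.
  split.
  - intro h. inversion h; subst. substext.
    do 6 eexists. split; [eassumption|split; [eassumption|]].
    exists G1, G, D1. do 12 (split; [first [reflexivity | assumption] |]); reflexivity.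
  - intros (x1 & x2 & tx & y1 & y2 & ty & h1 & h2 & G1 & G & D1 & e1 & e2 & ?&?&?&?&?&?&?&?& e3 & e4 & e5).
    subst. eapply ts_par; eauto; apply seteq_refl.
Qed.

Lemma par_mem_iff {Pap} z1 z2 (P Q : mem Pap) tz :
  typ_mem z1 z2 (MPar P Q) tz <-> exists x1 x2 tx y1 y2 ty,
    typ_mem x1 x2 P tx /\ typ_mem y1 y2 Q ty /\ PAR x1 x2 tx y1 y2 ty z1 z2 tz.
Proof.
  split.
  - intro h. inversion h; subst. substext.
    do 6 eexists. split; [eassumption|split; [eassumption|]].
    exists G1, G, D1. do 12 (split; [first [reflexivity | assumption] |]); reflexivity.
  - intros (x1 & x2 & tx & y1 & y2 & ty & h1 & h2 & G1 & G & D1 & e1 & e2 & ?&?&?&?&?&?&?&?& e3 & e4 & e5).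
    subst. eapply tm_par; eauto; apply seteq_refl.
Qed.

Lemma WF_sys {Pp Pap} G1 G2 (P : sys Pp Pap) t : typ_sys G1 G2 P t -> WF G1 G2 t.
Proof. intro h. destruct (typ_sys_wf _ _ _ _ h) as [[I1 [I2 _]] _]. split; auto. Qed.
Lemma WF_mem {Pap} G1 G2 (P : mem Pap) t : typ_mem G1 G2 P t -> WF G1 G2 t.
Proof. intro h. destruct (typ_mem_wf _ _ _ _ h) as [[I1 [I2 _]] _]. split; auto. Qed.

Lemma eq_pw {A} (X Y : A -> Prop) : X = Y -> forall n, X n <-> Y n.
Proof. intros; subst; tauto. Qed.

Ltac spec_nat n := repeat match goal with H : forall m : nat, _ |- _ => specialize (H n) end.
Ltac spec_act k n := repeat match goal with H : forall a : action, _ |- _ =>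
   let h1 := fresh in let h2 := fresh in
   pose proof (H (k, n)) as h1; pose proof (H (dualk k, n)) as h2; clear H; cbn in h1, h2 end.
Ltac ptsolve := sunfold; cbn in *;
  first [ apply ext; let k := fresh "k" in let n := fresh "n" in intros [k n]; spec_act k n; spec_nat n; cbn in *; tauto
        | apply ext; let n := fresh "n" in intro n; spec_nat n; cbn in *; tauto
        | let k := fresh "k" in let n := fresh "n" in intros [k n]; spec_act k n; spec_nat n; cbn in *; tauto
        | let n := fresh "n" in intro n; spec_nat n; cbn in *; tauto ].

Ltac splits := repeat match goal with |- _ /\ _ => split end.
Lemma dualk_dualk k : dualk (dualk k) = k. Proof. destruct k; reflexivity. Qed.

Lemma PAR_comm x1 x2 tx y1 y2 ty z1 z2 tz :
  PAR x1 x2 tx y1 y2 ty z1 z2 tz -> PAR y1 y2 ty x1 x2 tx z1 z2 tz.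
Proof.
  intros (G1 & G & D1 & e1 & e2 & d1 & d2 & oe & ot & d3 & d4 & d5 & d6 & e3 & e4 & e5).
  subst. exists D1, G, G1. splits; auto; try ptsolve.
  intros [k n]. specialize (ot (dualk k, n)). unfold seteq, perp, restr, dual in *. cbn [fst snd] in *. rewrite dualk_dualk in ot. tauto.
Qed.

Lemma PAR_assoc x1 x2 tx y1 y2 ty z1 z2 tz w1 w2 tw v1 v2 tv :
  WF x1 x2 tx -> WF y1 y2 ty -> WF z1 z2 tz ->
  PAR x1 x2 tx y1 y2 ty w1 w2 tw -> PAR w1 w2 tw z1 z2 tz v1 v2 tv ->
  exists u1 u2 tu, PAR y1 y2 ty z1 z2 tz u1 u2 tu /\ PAR x1 x2 tx u1 u2 tu v1 v2 tv.
Proof.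
  intros [X1 X2] [Y1 Y2] [Z1 Z2]
    (A1 & G & B1 & e1 & e2 & d1 & d2 & oe & ot & d3 & d4 & d5 & d6 & e3 & e4 & e5)
    (C1 & H & E1 & f1 & f2 & g1 & g2 & oe' & ot' & g3 & g4 & g5 & g6 & f3 & f4 & f5).
  subst x1 y1 w2 tw z1 v1 v2 tv.
  pose proof (eq_pw _ _ f1) as W. subst w1. clear f1.
  set (Dq := fun n => (B1 n /\ C1 n) \/ G n).
  set (Gqr := fun n => B1 n /\ H n).
  set (Er := fun n => E1 n \/ (H n /\ A1 n)).
  set (Pa := fun n => A1 n /\ C1 n).
  set (Gpu := fun n => G n \/ (H n /\ A1 n)).
  set (Du := fun n => (B1 n /\ C1 n) \/ E1 n).
  exists (union Dq Er), (union y2 (union z2 Gqr)), (union ty tz). split.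
  - exists Dq, Gqr, Er. subst Dq Gqr Er. splits; try reflexivity.
    6: { intros [k n]. pose proof (ot' (k,n)) as O. pose proof (X2 (dualk k, n)) as N.
         clear ot ot' X2 Y2 Z2 W X1 Y1 Z1. sunfold. spec_nat n. cbn in *. tauto. }
    all: clear X2 Y2 Z2 ot ot'; ptsolve.
  - exists Pa, Gpu, Du. subst Dq Gqr Er Pa Gpu Du. splits; try reflexivity.
    6: { intros [k n]. pose proof (ot (k,n)) as O. pose proof (ot' (k,n)) as O'.
      pose proof (Y2 (dualk k, n)) as N1. pose proof (Y2 (k, n)) as N2. pose proof (Z2 (k, n)) as N3.
      clear ot ot' X2 Y2 Z2 W X1 Y1 Z1. sunfold. spec_nat n. cbn in *. tauto. }
    12: { apply ext. intro a. unfold union. tauto. }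
    all: clear X2 Y2 Z2 ot ot'; ptsolve.
Qed.




Lemma PAR_unit x1 x2 tx : PAR x1 x2 tx emp emp emp x1 x2 tx.
Proof.
  exists x1, emp, emp. splits; try ptsolve.
Qed.

Lemma PAR_unit_inv x1 x2 tx z1 z2 tz : PAR x1 x2 tx emp emp emp z1 z2 tz -> z1 = x1 /\ z2 = x2 /\ tz = tx.
Proof.
  intros (G1 & G & D1 & e1 & e2 & d1 & d2 & oe & ot & d3 & d4 & d5 & d6 & e3 & e4 & e5).
  pose proof (eq_pw _ _ e2) as E2. clear e2. subst. splits; ptsolve.
Qed.

Lemma nil_sys_inv {Pp Pap} G1 G2 t : @typ_sys Pp Pap G1 G2 SNil t -> G1 = emp /\ G2 = emp /\ t = emp.
Proof. intro h. inversion h; subst. substext. auto. Qed.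
Lemma nil_mem_inv {Pap} G1 G2 t : @typ_mem Pap G1 G2 MNil t -> G1 = emp /\ G2 = emp /\ t = emp.
Proof. intro h. inversion h; subst. substext. auto. Qed.

Lemma sys_nil {Pp Pap} : @typ_sys Pp Pap emp emp SNil emp.
Proof. apply ts_empty; apply seteq_refl. Qed.
Lemma mem_nil {Pap} : @typ_mem Pap emp emp MNil emp.
Proof. apply tm_empty; apply seteq_refl. Qed.

Lemma sys_comm {Pp Pap} (P Q : sys Pp Pap) G1 G2 t : typ_sys G1 G2 (SPar P Q) t -> typ_sys G1 G2 (SPar Q P) t.
Proof.
  rewrite !par_sys_iff. intros (x1 & x2 & tx & y1 & y2 & ty & h1 & h2 & p).
  exists y1, y2, ty, x1, x2, tx. auto using PAR_comm.
Qed.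

Lemma sys_par_l {Pp Pap} (P P' Q : sys Pp Pap) :
  (forall G1 G2 t, typ_sys G1 G2 P t -> typ_sys G1 G2 P' t) ->
  forall G1 G2 t, typ_sys G1 G2 (SPar P Q) t -> typ_sys G1 G2 (SPar P' Q) t.
Proof.
  intros h G1 G2 t. rewrite !par_sys_iff. intros (x1 & x2 & tx & y1 & y2 & ty & h1 & h2 & p).
  exists x1, x2, tx, y1, y2, ty. auto.
Qed.

Lemma sys_par_r {Pp Pap} (P Q Q' : sys Pp Pap) :
  (forall G1 G2 t, typ_sys G1 G2 Q t -> typ_sys G1 G2 Q' t) ->
  forall G1 G2 t, typ_sys G1 G2 (SPar P Q) t -> typ_sys G1 G2 (SPar P Q') t.
Proof.
  intros h G1 G2 t. rewrite !par_sys_iff. intros (x1 & x2 & tx & y1 & y2 & ty & h1 & h2 & p).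
  exists x1, x2, tx, y1, y2, ty. auto.
Qed.

Lemma sys_assoc {Pp Pap} (P Q R : sys Pp Pap) G1 G2 t :
  typ_sys G1 G2 (SPar (SPar P Q) R) t -> typ_sys G1 G2 (SPar P (SPar Q R)) t.
Proof.
  rewrite par_sys_iff. intros (w1 & w2 & tw & z1 & z2 & tz & hw & hz & p2).
  rewrite par_sys_iff in hw. destruct hw as (x1 & x2 & tx & y1 & y2 & ty & hx & hy & p1).
  destruct (PAR_assoc _ _ _ _ _ _ _ _ _ _ _ _ _ _ _ (WF_sys _ _ _ _ hx) (WF_sys _ _ _ _ hy) (WF_sys _ _ _ _ hz) p1 p2)
    as (u1 & u2 & tu & q1 & q2).
  rewrite par_sys_iff. exists x1, x2, tx, u1, u2, tu. splits; auto.
  rewrite par_sys_iff. exists y1, y2, ty, z1, z2, tz. auto.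
Qed.

Lemma sys_assoc_rev {Pp Pap} (P Q R : sys Pp Pap) G1 G2 t :
  typ_sys G1 G2 (SPar P (SPar Q R)) t -> typ_sys G1 G2 (SPar (SPar P Q) R) t.
Proof.
  intro h. apply sys_comm in h. apply sys_assoc in h. apply sys_comm in h.
  apply sys_assoc in h. apply sys_comm in h. exact h.
Qed.

Lemma sys_unit {Pp Pap} (P : sys Pp Pap) G1 G2 t : typ_sys G1 G2 (SPar P SNil) t <-> typ_sys G1 G2 P t.
Proof.
  rewrite par_sys_iff. split.
  - intros (x1 & x2 & tx & y1 & y2 & ty & h1 & h2 & p).
    destruct (nil_sys_inv _ _ _ h2) as (-> & -> & ->).
    destruct (PAR_unit_inv _ _ _ _ _ _ p) as (-> & -> & ->). auto.
  - intro h. exists G1, G2, t, emp, emp, emp. splits; auto using sys_nil, PAR_unit.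
Qed.

Lemma mem_comm {Pap} (P Q : mem Pap) G1 G2 t : typ_mem G1 G2 (MPar P Q) t -> typ_mem G1 G2 (MPar Q P) t.
Proof.
  rewrite !par_mem_iff. intros (x1 & x2 & tx & y1 & y2 & ty & h1 & h2 & p).
  exists y1, y2, ty, x1, x2, tx. auto using PAR_comm.
Qed.

Lemma mem_par_l {Pap} (P P' Q : mem Pap) :
  (forall G1 G2 t, typ_mem G1 G2 P t -> typ_mem G1 G2 P' t) ->
  forall G1 G2 t, typ_mem G1 G2 (MPar P Q) t -> typ_mem G1 G2 (MPar P' Q) t.
Proof.
  intros h G1 G2 t. rewrite !par_mem_iff. intros (x1 & x2 & tx & y1 & y2 & ty & h1 & h2 & p).
  exists x1, x2, tx, y1, y2, ty. auto.
Qed.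

Lemma mem_par_r {Pap} (P Q Q' : mem Pap) :
  (forall G1 G2 t, typ_mem G1 G2 Q t -> typ_mem G1 G2 Q' t) ->
  forall G1 G2 t, typ_mem G1 G2 (MPar P Q) t -> typ_mem G1 G2 (MPar P Q') t.
Proof.
  intros h G1 G2 t. rewrite !par_mem_iff. intros (x1 & x2 & tx & y1 & y2 & ty & h1 & h2 & p).
  exists x1, x2, tx, y1, y2, ty. auto.
Qed.

Lemma mem_assoc {Pap} (P Q R : mem Pap) G1 G2 t :
  typ_mem G1 G2 (MPar (MPar P Q) R) t -> typ_mem G1 G2 (MPar P (MPar Q R)) t.
Proof.
  rewrite par_mem_iff. intros (w1 & w2 & tw & z1 & z2 & tz & hw & hz & p2).
  rewrite par_mem_iff in hw. destruct hw as (x1 & x2 & tx & y1 & y2 & ty & hx & hy & p1).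
  destruct (PAR_assoc _ _ _ _ _ _ _ _ _ _ _ _ _ _ _ (WF_mem _ _ _ _ hx) (WF_mem _ _ _ _ hy) (WF_mem _ _ _ _ hz) p1 p2)
    as (u1 & u2 & tu & q1 & q2).
  rewrite par_mem_iff. exists x1, x2, tx, u1, u2, tu. splits; auto.
  rewrite par_mem_iff. exists y1, y2, ty, z1, z2, tz. auto.
Qed.

Lemma mem_assoc_rev {Pap} (P Q R : mem Pap) G1 G2 t :
  typ_mem G1 G2 (MPar P (MPar Q R)) t -> typ_mem G1 G2 (MPar (MPar P Q) R) t.
Proof.
  intro h. apply mem_comm in h. apply mem_assoc in h. apply mem_comm in h.
  apply mem_assoc in h. apply mem_comm in h. exact h.
Qed.

Lemma mem_unit {Pap} (P : mem Pap) G1 G2 t : typ_mem G1 G2 (MPar P MNil) t <-> typ_mem G1 G2 P t.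
Proof.
  rewrite par_mem_iff. split.
  - intros (x1 & x2 & tx & y1 & y2 & ty & h1 & h2 & p).
    destruct (nil_mem_inv _ _ _ h2) as (-> & -> & ->).
    destruct (PAR_unit_inv _ _ _ _ _ _ p) as (-> & -> & ->). auto.
  - intro h. exists G1, G2, t, emp, emp, emp. splits; auto using mem_nil, PAR_unit.
Qed.

Lemma mem_copinch_inv {Pap} n (S : mem Pap) G1 G2 t : typ_mem G1 G2 (MCoPinch n S) t ->
  exists H1, typ_mem H1 G2 S emp /\ (forall a, ~ act_mem S a) /\ ~ H1 n /\ ~ G2 n /\
    G1 = union H1 (single n) /\ t = single (Kpp, n).
Proof. intro h. inversion h; subst. substext. eauto 10. Qed.

Lemma mequiv_typ {Pap} (S T : mem Pap) : mequiv S T ->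
  (forall a, act_mem S a <-> act_mem T a) /\
  forall G1 G2 t, typ_mem G1 G2 S t <-> typ_mem G1 G2 T t.
Proof.
  induction 1.
  - split; intros; reflexivity.
  - destruct IHmequiv as [h1 h2]. split; intros; [rewrite h1|rewrite h2]; reflexivity.
  - destruct IHmequiv1 as [h1 h2]. destruct IHmequiv2 as [h3 h4].
    split; intros; [rewrite h1, h3|rewrite h2, h4]; reflexivity.
  - split; intros; simpl; [tauto|split; apply mem_comm].
  - split; intros; simpl; [tauto|split; [apply mem_assoc|apply mem_assoc_rev]].
  - split; intros; simpl; [tauto|apply mem_unit].
  - destruct IHmequiv as [h1 h2]. split; intros; simpl; [rewrite h1; tauto|].
    split; apply mem_par_l; intros; apply h2; auto.
  - destruct IHmequiv as [h1 h2]. split; intros; simpl; [rewrite h1; tauto|].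
    split; apply mem_par_r; intros; apply h2; auto.
  - destruct IHmequiv as [h1 h2]. split; intros; simpl; [rewrite h1; tauto|].
    split; intro h; apply mem_copinch_inv in h; destruct h as (H1 & a1 & a2 & a3 & a4 & -> & ->).
    + eapply tm_copinch with (G1 := H1); [apply h2; exact a1 | intro a; rewrite <- h1; apply a2 | exact a3 | exact a4 | apply seteq_refl..].
    + eapply tm_copinch with (G1 := H1); [apply h2; exact a1 | intro a; rewrite h1; apply a2 | exact a3 | exact a4 | apply seteq_refl..].
Qed.


Definition NN (k : akind) (x : nat) : tset := union (single (k, x)) (single (dual (k, x))).

Lemma inv_nu {Pp Pap} G1 G2 x (P : sys Pp Pap) T : typ_sys G1 G2 (SNu x P) T ->
 (exists G2', typ_sys G1 G2' P T /\ ~ G1 x /\ (forall a, T a -> snd a <> x) /\ G2 = (fun y => G2' y /\ y <> x)) \/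
 (exists k, (k = Kp \/ k = Kf) /\ typ_sys G1 (union G2 (single x)) P (union T (NN k x)) /\ ~ G2 x /\ ~ T (k, x) /\ ~ T (dual (k, x))).
Proof.
  intro h. inversion h; subst; substext.
  - left. eexists. splits; eauto. intros a ta e. match goal with H : seteq (restr _ _) _ |- _ => apply (proj1 (H a)) end. unfold restr, single. auto.
  - right. exists k. splits; auto.
Qed.

Lemma mk_nuprot {Pp Pap} G1 G2 G2' x (P : sys Pp Pap) T :
  typ_sys G1 G2' P T -> ~ G1 x -> (forall a, T a -> snd a <> x) -> seteq G2 (fun y => G2' y /\ y <> x) ->
  typ_sys G1 G2 (SNu x P) T.
Proof.
  intros h n t e. eapply ts_nuprot; eauto; try apply seteq_refl.
  intros a. unfold restr, single, emp. split; [|tauto]. intros [ta ea]. apply (t a ta ea).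
Qed.

Lemma mk_nuact {Pp Pap} k G1 G2 G2' x (P : sys Pp Pap) T T' :
  (k = Kp \/ k = Kf) -> typ_sys G1 G2' P T' -> seteq G2' (union G2 (single x)) -> seteq T' (union T (NN k x)) ->
  ~ G2 x -> ~ T (k, x) -> ~ T (dual (k, x)) -> typ_sys G1 G2 (SNu x P) T.
Proof.
  intros hk h e1 e2 n1 n2 n3. apply ext in e1, e2. subst. eapply ts_nuact; eauto; apply seteq_refl.
Qed.

Lemma inv_pinch {Pp Pap} G1 G2 x (P : sys Pp Pap) T : typ_sys G1 G2 (SPinch x P) T ->
  exists H1, typ_sys H1 G2 P emp /\ (forall a, ~ act_sys P a) /\ ~ H1 x /\ ~ G2 x /\
    G1 = union H1 (single x) /\ T = single (Kp, x).
Proof. intro h. inversion h; subst. substext. eauto 10. Qed.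

Lemma mk_pinch {Pp Pap} H1 G1 G2 x (P : sys Pp Pap) T : typ_sys H1 G2 P emp -> (forall a, ~ act_sys P a) ->
  ~ H1 x -> ~ G2 x -> seteq G1 (union H1 (single x)) -> seteq T (single (Kp, x)) -> typ_sys G1 G2 (SPinch x P) T.
Proof. intros. eapply ts_pinch; eauto. apply seteq_refl. Qed.

Lemma inv_fuse {Pp Pap} G1 G2 x S (P : sys Pp Pap) T : typ_sys G1 G2 (SFuse x S P) T ->
  exists H1, typ_sys H1 G2 (SComp S P) emp /\ (forall a, ~ act_sys (SComp S P) a) /\ ~ H1 x /\ ~ G2 x /\
    G1 = union H1 (single x) /\ T = single (Kf, x).
Proof. intro h. inversion h; subst. substext. eauto 10. Qed.

Lemma mk_fuse {Pp Pap} H1 G1 G2 x S (P : sys Pp Pap) T : typ_sys H1 G2 (SComp S P) emp -> (forall a, ~ act_sys (SComp S P) a) ->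
  ~ H1 x -> ~ G2 x -> seteq G1 (union H1 (single x)) -> seteq T (single (Kf, x)) -> typ_sys G1 G2 (SFuse x S P) T.
Proof. intros. eapply ts_fuse; eauto. apply seteq_refl. Qed.

Lemma inv_comp {Pp Pap} C1 C2 S (P : sys Pp Pap) U : typ_sys C1 C2 (SComp S P) U ->
  exists G G2 D2 t s, typ_mem (union C1 G) G2 S t /\ typ_sys G D2 P s /\ disj C1 G /\ ok_e C1 G2 emp D2 /\
    ok_t G t s /\ disj G2 D2 /\ disj G2 G /\ disj D2 G /\ C2 = union G2 (union D2 G) /\ U = union t s.
Proof. intro h. inversion h; subst. substext. exists G, G2, D2, t, s. splits; auto. Qed.

Lemma mk_comp {Pp Pap} C1 C2 G G2 D2 t s S (P : sys Pp Pap) U : typ_mem (union C1 G) G2 S t -> typ_sys G D2 P s ->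
  disj C1 G -> ok_e C1 G2 emp D2 -> ok_t G t s -> disj G2 D2 -> disj G2 G -> disj D2 G ->
  seteq C2 (union G2 (union D2 G)) -> seteq U (union t s) -> typ_sys C1 C2 (SComp S P) U.
Proof. intros. eapply ts_cell; eauto. apply seteq_refl. Qed.

Lemma notfn_sys {Pp Pap} G1 G2 (P : sys Pp Pap) t n : typ_sys G1 G2 P t -> ~ sys_fn P n ->
  ~ G1 n /\ ~ G2 n /\ (forall a, t a -> snd a <> n).
Proof.
  intros h f. destruct (typ_sys_wf _ _ _ _ h) as [[_ [I2 _]] [F _]].
  splits; auto. intros a ta e. subst. destruct (I2 a ta); auto.
Qed.

Lemma notfn_mem {Pap} G1 G2 (P : mem Pap) t n : typ_mem G1 G2 P t -> ~ mem_fn P n ->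
  ~ G1 n /\ ~ G2 n /\ (forall a, t a -> snd a <> n).
Proof.
  intros h f. destruct (typ_mem_wf _ _ _ _ h) as [[_ [I2 _]] [F _]].
  splits; auto. intros a ta e. subst. destruct (I2 a ta); auto.
Qed.

Lemma act_dec (a b : action) : a = b \/ a <> b.
Proof. destruct a as [k x], b as [k' y]. destruct (Nat.eq_dec x y); [|right; congruence].
  destruct k, k'; subst; (left; reflexivity) || (right; congruence). Qed.

Lemma nu_cong {Pp Pap} n (P P' : sys Pp Pap) : (forall G1 G2 t, typ_sys G1 G2 P t -> typ_sys G1 G2 P' t) ->
  forall G1 G2 t, typ_sys G1 G2 (SNu n P) t -> typ_sys G1 G2 (SNu n P') t.
Proof.
  intros h G1 G2 t hn. destruct (inv_nu _ _ _ _ _ hn) as [(G2' & h1 & h2 & h3 & ->)|(k & hk & h1 & h2 & h3 & h4)].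
  - eapply mk_nuprot; eauto. apply seteq_refl.
  - eapply mk_nuact; eauto; apply seteq_refl.
Qed.

Lemma nu_nil {Pp Pap} n G1 G2 t : typ_sys G1 G2 (SNu n (@SNil Pp Pap)) t <-> typ_sys G1 G2 (@SNil Pp Pap) t.
Proof.
  split; intro h.
  - destruct (inv_nu _ _ _ _ _ h) as [(G2' & h1 & h2 & h3 & ->)|(k & hk & h1 & h2 & h3 & h4)].
    + destruct (nil_sys_inv _ _ _ h1) as (-> & -> & ->). apply ts_empty; ptsolve.
    + destruct (nil_sys_inv _ _ _ h1) as (_ & e & _). exfalso. apply (proj1 (eq_pw _ _ e n)). unfold union, single. auto.
  - destruct (nil_sys_inv _ _ _ h) as (-> & -> & ->). eapply mk_nuprot; [apply sys_nil| | |]; ptsolve.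
Qed.


Lemma NN_snd k x a : NN k x a -> snd a = x.
Proof. unfold NN, union, single. intros [h|h]; subst; reflexivity. Qed.

Lemma NN_in1 k x : NN k x (k, x). Proof. left. reflexivity. Qed.
Lemma NN_in2 k x : NN k x (dual (k, x)). Proof. right. reflexivity. Qed.

Lemma nu_nu {Pp Pap} n m (P : sys Pp Pap) G1 G2 t : n <> m ->
  typ_sys G1 G2 (SNu n (SNu m P)) t -> typ_sys G1 G2 (SNu m (SNu n P)) t.
Proof.
  intros nm h.
  destruct (inv_nu _ _ _ _ _ h) as [(G2' & h1 & a1 & a2 & ->)|(k & hk & h1 & a1 & a2 & a3)].
  - destruct (inv_nu _ _ _ _ _ h1) as [(G2'' & h2 & b1 & b2 & ->)|(k & hk & h2 & b1 & b2 & b3)].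
    + eapply mk_nuprot; [eapply mk_nuprot; [exact h2|auto|auto|apply seteq_refl]|auto|auto|].
      intro y. tauto.
    + eapply mk_nuact; [exact hk| eapply mk_nuprot; [exact h2|auto| |apply seteq_refl] | | apply seteq_refl | | |].
      * intros a [ta|na]; auto. rewrite (NN_snd _ _ _ na). congruence.
      * intro y. unfold union, single. intuition congruence.
      * tauto.
      * auto.
      * auto.
  - destruct (inv_nu _ _ _ _ _ h1) as [(Y & h2 & b1 & b2 & e)|(k' & hk' & h2 & b1 & b2 & b3)].
    + assert (Yn : Y n). { apply (proj1 (eq_pw _ _ e n)). unfold union, single. auto. }
      eapply mk_nuprot; [eapply mk_nuact with (G2 := fun y => Y y /\ y <> n); [exact hk|exact h2| |apply seteq_refl| | |] |auto| |].
      * intro y. unfold union, single. destruct (Nat.eq_dec y n); intuition congruence.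
      * tauto.
      * auto.
      * auto.
      * intros a ta. apply b2. left. auto.
      * intro y. pose proof (eq_pw _ _ e y) as E. unfold union, single in E.
        destruct (Nat.eq_dec y n); intuition congruence.
    + eapply mk_nuact with (G2' := union G2 (single m)) (T' := union t (NN k' m));
        [exact hk'| eapply mk_nuact; [exact hk|exact h2| | | | |] | apply seteq_refl | apply seteq_refl | | |].
      * intro y. unfold union, single. tauto.
      * intro y. unfold union. tauto.
      * unfold union, single. intuition congruence.
      * intros [ta|na]; auto. apply (NN_snd _ _ _) in na. simpl in na. auto.
      * intros [ta|na]; auto. apply (NN_snd _ _ _) in na. simpl in na. auto.
      * unfold union, single in b1. tauto.
      * intro. apply b2. left. auto.
      * intro. apply b3. left. auto.
Qed.


Definition minus (X : nset) (n : nat) : nset := fun v => X v /\ v <> n.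

Lemma PAR_hide x1 x2 tx y1 y2 ty z1 z2 tz n :
  PAR x1 x2 tx y1 y2 ty z1 z2 tz -> ~ y1 n -> ~ y2 n ->
  PAR x1 (minus x2 n) tx y1 y2 ty z1 (minus z2 n) tz.
Proof.
  intros (G1 & G & D1 & e1 & e2 & d1 & d2 & oe & ot & d3 & d4 & d5 & d6 & e3 & e4 & e5) n1 n2.
  subst. exists G1, G, D1. unfold minus. splits; auto; try ptsolve.
  apply ext. intro v. unfold union in *. destruct (Nat.eq_dec v n); subst; intuition congruence.
Qed.

Lemma PAR_unhide x1 x2 tx y1 y2 ty z1 z2 tz n :
  PAR x1 (minus x2 n) tx y1 y2 ty z1 z2 tz -> ~ y1 n -> ~ y2 n ->
  exists z2', PAR x1 x2 tx y1 y2 ty z1 z2' tz /\ z2 = minus z2' n.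
Proof.
  intros (G1 & G & D1 & e1 & e2 & d1 & d2 & oe & ot & d3 & d4 & d5 & d6 & e3 & e4 & e5) n1 n2.
  subst. exists (union x2 (union y2 G)). split.
  - exists G1, G, D1. unfold minus in *. splits; auto; try ptsolve.
    + intros v h1 h2. destruct (Nat.eq_dec v n); subst.
      * unfold union in *. tauto.
      * apply (oe v); unfold union in *; tauto.
    + intros v h1 h2. destruct (Nat.eq_dec v n); subst; [unfold union in *; tauto|apply (d4 v); auto].
    + intros v h1 h2. destruct (Nat.eq_dec v n); subst; [unfold union in *; tauto|apply (d5 v); auto].
  - unfold minus. apply ext. intro v. unfold union in *. destruct (Nat.eq_dec v n); subst; intuition congruence.
Qed.

Lemma PAR_act x1 x2 tx y1 y2 ty z1 z2 tz n k :
  PAR x1 x2 tx y1 y2 ty z1 (union z2 (single n)) (union tz (NN k n)) -> ~ y1 n -> ~ y2 n ->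
  (forall a, ty a -> snd a <> n) -> ~ z2 n -> ~ tz (k, n) -> ~ tz (dual (k, n)) ->
  exists X tP, x2 = union X (single n) /\ tx = union tP (NN k n) /\ ~ X n /\ ~ tP (k, n) /\ ~ tP (dual (k, n)) /\
    PAR x1 X tP y1 y2 ty z1 z2 tz.
Proof.
  intros (G1 & G & D1 & e1 & e2 & d1 & d2 & oe & ot & d3 & d4 & d5 & d6 & e3 & e4 & e5) n1 n2 n3 n4 n5 n6.
  subst.
  assert (xn : x2 n). { pose proof (eq_pw _ _ e4 n) as E. unfold union, single in *. tauto. }
  assert (NNt : forall a, NN k n a -> tx a).
  { intros a na. pose proof (eq_pw _ _ e5 a) as E. unfold union in E.
    destruct (proj1 E (or_intror na)); auto. exfalso. apply (n3 a); auto. apply (NN_snd _ _ _ na). }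
  assert (NNz : forall a, NN k n a -> ~ tz a).
  { intros a [h|h]; unfold single in h; subst; auto. }
  exists (minus x2 n), (fun a => tx a /\ ~ NN k n a). splits.
  - apply ext. intro v. unfold union, single, minus. destruct (Nat.eq_dec v n); subst; intuition congruence.
  - apply ext. intro a. unfold union. destruct (classic (NN k n a)); intuition.
  - unfold minus. tauto.
  - intros [_ h]. apply h. apply NN_in1.
  - intros [_ h]. apply h. apply NN_in2.
  - exists G1, G, D1. unfold minus. splits; auto; try ptsolve.
    + intros [k' v]. unfold perp, restr. cbn. pose proof (ot (k', v)) as O. unfold perp, restr in O. cbn in O.
      split.
      * intros [[h1 h2] h3]. apply O. auto.
      * intros [h1 h2]. destruct (proj2 O (conj h1 h2)) as [h4 h5]. splits; auto.
        intro na. apply (NN_snd _ _ _) in na. cbn in na. subst. unfold union in *. tauto.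
    + apply ext. intro v. pose proof (eq_pw _ _ e4 v) as E. unfold union, single in *.
      destruct (Nat.eq_dec v n); subst; intuition congruence.
    + apply ext. intro a. pose proof (eq_pw _ _ e5 a) as E. unfold union in *.
      split.
      * intro h. destruct (proj1 E (or_introl h)) as [h'|h']; auto.
        left. split; auto. intro na. apply (NNz a na h).
      * intros [[h1 h2]|h1].
        -- destruct (proj2 E (or_introl h1)); tauto.
        -- destruct (proj2 E (or_intror h1)); auto. exfalso. apply (n3 a h1). apply (NN_snd _ _ _ H).
Qed.

Lemma PAR_unact x1 X tP y1 y2 ty z1 z2 tz n k :
  PAR x1 X tP y1 y2 ty z1 z2 tz -> ~ y1 n -> ~ y2 n -> (forall a, ty a -> snd a <> n) -> ~ X n ->
  PAR x1 (union X (single n)) (union tP (NN k n)) y1 y2 ty z1 (union z2 (single n)) (union tz (NN k n)).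
Proof.
  intros (G1 & G & D1 & e1 & e2 & d1 & d2 & oe & ot & d3 & d4 & d5 & d6 & e3 & e4 & e5) n1 n2 n3 n4.
  subst. exists G1, G, D1. splits; auto; try ptsolve.
  - unfold ok_e, disj in *. intros v h1 h2. unfold union, single in *. destruct h1 as [h|[h|h]]; [apply (oe v)|apply (oe v)|subst; tauto]; auto.
  - intros [k' v]. unfold perp, restr. cbn. pose proof (ot (k', v)) as O. unfold perp, restr in O. cbn in O.
    unfold union, NN, single in *. split.
    + intros [[h1|[h1|h1]] h2]; [apply O; auto| |]; inversion h1; subst; exfalso; apply n1; right; auto.
    + intros [h1 h2]. destruct (proj2 O (conj h1 h2)). auto.
  - intros v h1 h2. unfold union, single in *. destruct h1 as [h|h]; [apply (d4 v)|subst; tauto]; auto.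
  - intros v h1 h2. unfold union, single in *. destruct h1 as [h|h]; [apply (d5 v)|subst; tauto]; auto.
Qed.



Lemma PAR_facts x1 x2 tx y1 y2 ty z1 z2 tz : PAR x1 x2 tx y1 y2 ty z1 z2 tz ->
  (forall v, z1 v -> x1 v \/ y1 v) /\ (forall v, z2 v -> x2 v \/ y2 v \/ y1 v) /\
  (forall a, tz a -> tx a \/ ty a) /\ (forall v, x1 v -> ~ y1 v -> z1 v) /\ (forall a, tx a -> tz a) /\
  (forall a, ty a -> tz a).
Proof.
  intros (G1 & G & D1 & e1 & e2 & d1 & d2 & oe & ot & d3 & d4 & d5 & d6 & e3 & e4 & e5).
  subst. unfold union. splits; intros; tauto.
Qed.

Lemma nu_par_l {Pp Pap} n (P Q : sys Pp Pap) G1 G2 t : ~ sys_fn Q n ->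
  typ_sys G1 G2 (SNu n (SPar P Q)) t -> typ_sys G1 G2 (SPar (SNu n P) Q) t.
Proof.
  intros nf h. destruct (inv_nu _ _ _ _ _ h) as [(G2' & h1 & a1 & a2 & ->)|(k & hk & h1 & a1 & a2 & a3)].
  - rewrite par_sys_iff in h1. destruct h1 as (x1 & x2 & tx & y1 & y2 & ty & hP & hQ & p).
    destruct (notfn_sys _ _ _ _ _ hQ nf) as (b1 & b2 & b3).
    destruct (PAR_facts _ _ _ _ _ _ _ _ _ p) as (f1 & f2 & f3 & f4 & f5 & f6).
    rewrite par_sys_iff. exists x1, (minus x2 n), tx, y1, y2, ty. splits; auto.
    + eapply mk_nuprot; [exact hP| intro h0; apply a1; auto | intros a ta; apply a2; auto | apply seteq_refl].
    + apply (PAR_hide _ _ _ _ _ _ _ _ _ _ p b1 b2).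
  - rewrite par_sys_iff in h1. destruct h1 as (x1 & x2 & tx & y1 & y2 & ty & hP & hQ & p).
    destruct (notfn_sys _ _ _ _ _ hQ nf) as (b1 & b2 & b3).
    destruct (PAR_act _ _ _ _ _ _ _ _ _ _ _ p b1 b2 b3 a1 a2 a3) as (X & tP & -> & -> & c1 & c2 & c3 & p').
    rewrite par_sys_iff. exists x1, X, tP, y1, y2, ty. splits; auto.
    eapply mk_nuact; eauto; apply seteq_refl.
Qed.

Lemma nu_par_r {Pp Pap} n (P Q : sys Pp Pap) G1 G2 t : ~ sys_fn Q n ->
  typ_sys G1 G2 (SPar (SNu n P) Q) t -> typ_sys G1 G2 (SNu n (SPar P Q)) t.
Proof.
  intros nf h. rewrite par_sys_iff in h. destruct h as (x1 & x2 & tx & y1 & y2 & ty & hP & hQ & p).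
  destruct (notfn_sys _ _ _ _ _ hQ nf) as (b1 & b2 & b3).
  destruct (inv_nu _ _ _ _ _ hP) as [(X & h1 & a1 & a2 & ->)|(k & hk & h1 & a1 & a2 & a3)].
  - destruct (PAR_unhide _ _ _ _ _ _ _ _ _ _ p b1 b2) as (z2' & p' & ->).
    destruct (PAR_facts _ _ _ _ _ _ _ _ _ p') as (f1 & f2 & f3 & f4 & f5 & f6).
    eapply mk_nuprot; [rewrite par_sys_iff; exists x1, X, tx, y1, y2, ty; splits; eauto| | |apply seteq_refl].
    + intro h0. destruct (f1 n h0); auto.
    + intros a ta. destruct (f3 a ta); auto.
  - pose proof (PAR_unact _ _ _ _ _ _ _ _ _ _ k p b1 b2 b3 a1) as p'.
    destruct (PAR_facts _ _ _ _ _ _ _ _ _ p) as (f1 & f2 & f3 & f4 & f5 & f6).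
    eapply mk_nuact; [exact hk|rewrite par_sys_iff; exists x1, (union x2 (single n)), (union tx (NN k n)), y1, y2, ty; splits; eauto|apply seteq_refl|apply seteq_refl| | |].
    + intro h0. destruct (f2 n h0) as [?|[?|?]]; auto.
    + intro h0. destruct (f3 _ h0); auto. apply (b3 _ H). reflexivity.
    + intro h0. destruct (f3 _ h0); auto. apply (b3 _ H). reflexivity.
Qed.


Lemma nu_comp_l {Pp Pap} n S (P : sys Pp Pap) C1 C2 U : ~ mem_fn S n ->
  typ_sys C1 C2 (SNu n (SComp S P)) U -> typ_sys C1 C2 (SComp S (SNu n P)) U.
Proof.
  intros nf h. destruct (inv_nu _ _ _ _ _ h) as [(C2' & h1 & a1 & a2 & ->)|(k & hk & h1 & a1 & a2 & a3)].
  - destruct (inv_comp _ _ _ _ _ h1) as (G & G2 & D2 & t & s & hS & hP & c1 & c2 & c3 & c4 & c5 & c6 & -> & ->).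
    destruct (notfn_mem _ _ _ _ _ hS nf) as (b1 & b2 & b3).
    eapply mk_comp with (D2 := minus D2 n); [exact hS| | exact c1 | | exact c3 | | exact c5 | | |].
    + eapply mk_nuprot; [exact hP| | |apply seteq_refl].
      * intro. apply b1. right. auto.
      * intros a sa. apply a2. right. auto.
    + unfold ok_e, disj, minus, union, emp in *. intros v h1' h2'. apply (c2 v); tauto.
    + unfold disj, minus in *. intros v h1' h2'. apply (c4 v); tauto.
    + unfold disj, minus in *. intros v h1' h2'. apply (c6 v); tauto.
    + intro v. unfold minus, union in *. destruct (Nat.eq_dec v n); subst; intuition congruence.
    + apply seteq_refl.
  - destruct (inv_comp _ _ _ _ _ h1) as (G & G2 & D2 & t & s & hS & hP & c1 & c2 & c3 & c4 & c5 & c6 & e1 & e2).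
    destruct (notfn_mem _ _ _ _ _ hS nf) as (b1 & b2 & b3).
    assert (Dn : D2 n).
    { pose proof (eq_pw _ _ e1 n) as E. unfold union, single in *. intuition. }
    assert (Gn : ~ G n). { intro. apply b1. right. auto. }
    assert (NNs : forall a, NN k n a -> s a).
    { intros a na. pose proof (eq_pw _ _ e2 a) as E. unfold union in E.
      destruct (proj1 E (or_intror na)); auto. exfalso. apply (b3 a); auto. apply (NN_snd _ _ _ na). }
    eapply mk_comp with (D2 := minus D2 n) (s := fun a => s a /\ ~ NN k n a);
      [exact hS| | exact c1 | | | | exact c5 | | |].
    + eapply mk_nuact with (k := k); [exact hk|exact hP| | | | |].
      * intro v. unfold minus, union, single. destruct (Nat.eq_dec v n); subst; intuition congruence.
      * intro a. unfold union. destruct (classic (NN k n a)); intuition.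
      * unfold minus. tauto.
      * intros [_ h0]. apply h0. apply NN_in1.
      * intros [_ h0]. apply h0. apply NN_in2.
    + unfold ok_e, disj, minus, union, emp in *. intros v h1' h2'. apply (c2 v); tauto.
    + intros [k' v]. pose proof (c3 (k', v)) as O. unfold perp, restr in *. cbn in *. split.
      * intros h0. destruct (proj1 O h0). splits; auto. intro na. apply (NN_snd _ _ _) in na. cbn in na. subst. tauto.
      * intros [[h0 h0'] h0'']. apply O. auto.
    + unfold disj, minus in *. intros v h1' h2'. apply (c4 v); tauto.
    + unfold disj, minus in *. intros v h1' h2'. apply (c6 v); tauto.
    + intro v. pose proof (eq_pw _ _ e1 v) as E. unfold minus, union, single in *.
      destruct (Nat.eq_dec v n); subst; intuition congruence.
    + intro a. pose proof (eq_pw _ _ e2 a) as E. unfold union in *. split.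
      * intro h0. destruct (proj1 E (or_introl h0)); auto. right. split; auto.
        intros [h'|h']; unfold single in h'; subst; auto.
      * intros [h0|[h0 h0']]; [destruct (proj2 E (or_introl h0))|destruct (proj2 E (or_intror h0))]; auto; try contradiction.
        exfalso. apply (b3 a h0). apply (NN_snd _ _ _ H).
Qed.

Lemma nu_comp_r {Pp Pap} n S (P : sys Pp Pap) C1 C2 U : ~ mem_fn S n ->
  typ_sys C1 C2 (SComp S (SNu n P)) U -> typ_sys C1 C2 (SNu n (SComp S P)) U.
Proof.
  intros nf h.
  destruct (inv_comp _ _ _ _ _ h) as (G & G2 & D2 & t & s & hS & hnP & c1 & c2 & c3 & c4 & c5 & c6 & -> & ->).
  destruct (notfn_mem _ _ _ _ _ hS nf) as (b1 & b2 & b3).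
  assert (Gn : ~ G n). { intro. apply b1. right. auto. }
  assert (Cn : ~ C1 n). { intro. apply b1. left. auto. }
  destruct (inv_nu _ _ _ _ _ hnP) as [(Y & hP & a1 & a2 & ->)|(k & hk & hP & a1 & a2 & a3)].
  - eapply mk_nuprot with (G2' := union G2 (union Y G));
      [eapply mk_comp; [exact hS|exact hP|exact c1| | exact c3 | | exact c5 | | apply seteq_refl | apply seteq_refl]| | |].
    + unfold ok_e, disj, union, emp in *. intros v h1' h2'. destruct (Nat.eq_dec v n); subst; [tauto|].
      apply (c2 v); unfold minus; tauto.
    + unfold disj, minus in *. intros v h1' h2'. destruct (Nat.eq_dec v n); subst; [tauto|]. apply (c4 v); tauto.
    + unfold disj, minus in *. intros v h1' h2'. destruct (Nat.eq_dec v n); subst; [tauto|]. apply (c6 v); tauto.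
    + exact Cn.
    + intros a [ta|sa]; auto.
    + intro v. unfold minus, union in *. destruct (Nat.eq_dec v n); subst; intuition congruence.
  - eapply mk_nuact with (k := k) (G2' := union G2 (union (union D2 (single n)) G)) (T' := union t (union s (NN k n)));
      [exact hk|eapply mk_comp; [exact hS|exact hP|exact c1| | | | exact c5 | | apply seteq_refl | apply seteq_refl]| | | | |].
    + unfold ok_e, disj, union, single, emp in *. intros v h1' h2'. destruct (Nat.eq_dec v n); subst; [tauto|].
      apply (c2 v); tauto.
    + intros [k' v]. pose proof (c3 (k', v)) as O. unfold perp, restr, union in *. cbn in *. split.
      * intros h0. destruct (proj1 O h0). auto.
      * intros [[h0|h0] h0']; [apply O; auto|]. apply (NN_snd _ _ _) in h0. cbn in h0. subst. tauto.
    + unfold disj, union, single in *. intros v h1' h2'. destruct h2' as [h2'|h2']; [apply (c4 v); auto|subst; tauto].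
    + unfold disj, union, single in *. intros v h1' h2'. destruct h1' as [h1'|h1']; [apply (c6 v); auto|subst; tauto].
    + intro v. unfold union, single. tauto.
    + intro a. unfold union. tauto.
    + unfold union. intros [h0|[h0|h0]]; auto.
    + unfold union. intros [h0|h0]; [apply (b3 _ h0)|]; auto.
    + unfold union. intros [h0|h0]; [apply (b3 _ h0)|]; auto.
Qed.


Lemma noact_nu {Pp Pap} n (P : sys Pp Pap) : (forall a, ~ act_sys (SNu n P) a) <-> (forall a, ~ act_sys P a).
Proof. simpl. tauto. Qed.

Lemma typ_act {Pp Pap} G1 G2 (P : sys Pp Pap) t a : typ_sys G1 G2 P t -> t a -> act_sys P a.
Proof. intros h ta. destruct (typ_sys_wf _ _ _ _ h) as [_ [_ A]]. auto. Qed.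

Lemma nu_pinch_l {Pp Pap} n m (P : sys Pp Pap) G1 G2 T : n <> m ->
  typ_sys G1 G2 (SNu n (SPinch m P)) T -> typ_sys G1 G2 (SPinch m (SNu n P)) T.
Proof.
  intros nm h. destruct (inv_nu _ _ _ _ _ h) as [(G2' & h1 & a1 & a2 & ->)|(k & hk & h1 & a1 & a2 & a3)].
  - destruct (inv_pinch _ _ _ _ _ h1) as (H1 & hP & na & b1 & b2 & -> & ->).
    eapply mk_pinch; [eapply mk_nuprot; [exact hP| | |apply seteq_refl]| | | | apply seteq_refl | apply seteq_refl].
    + intro. apply a1. left. auto.
    + intros a [].
    + exact na.
    + exact b1.
    + unfold minus. tauto.
  - destruct (inv_pinch _ _ _ _ _ h1) as (H1 & hP & na & b1 & b2 & e1 & e2).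
    exfalso. pose proof (eq_pw _ _ e2 (k, n)) as E. unfold union, single in E.
    assert (e : (k, n) = (Kp, m)) by (apply E; right; apply NN_in1). inversion e. auto.
Qed.

Lemma nu_pinch_r {Pp Pap} n m (P : sys Pp Pap) G1 G2 T : n <> m ->
  typ_sys G1 G2 (SPinch m (SNu n P)) T -> typ_sys G1 G2 (SNu n (SPinch m P)) T.
Proof.
  intros nm h. destruct (inv_pinch _ _ _ _ _ h) as (H1 & hnP & na & b1 & b2 & -> & ->).
  destruct (inv_nu _ _ _ _ _ hnP) as [(Y & hP & a1 & a2 & ->)|(k & hk & hP & a1 & a2 & a3)].
  - eapply mk_nuprot; [eapply mk_pinch; [exact hP|exact na|exact b1| |apply seteq_refl|apply seteq_refl]| | |apply seteq_refl].
    + intro. apply b2. split; auto.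
    + unfold union, single. intros [h'|h']; auto.
    + unfold single. intros a e. subst. simpl. auto.
  - exfalso. apply (na (k, n)). simpl. apply (typ_act _ _ _ _ _ hP). right. apply NN_in1.
Qed.

Lemma act_comp_nu {Pp Pap} n S (P : sys Pp Pap) a : act_sys (SComp S (SNu n P)) a <-> act_sys (SComp S P) a.
Proof. simpl. tauto. Qed.

Lemma nu_fuse_l {Pp Pap} n m S (P : sys Pp Pap) G1 G2 T : n <> m -> ~ mem_fn S n ->
  typ_sys G1 G2 (SNu n (SFuse m S P)) T -> typ_sys G1 G2 (SFuse m S (SNu n P)) T.
Proof.
  intros nm nf h. destruct (inv_nu _ _ _ _ _ h) as [(G2' & h1 & a1 & a2 & ->)|(k & hk & h1 & a1 & a2 & a3)].
  - destruct (inv_fuse _ _ _ _ _ _ h1) as (H1 & hP & na & b1 & b2 & -> & ->).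
    eapply mk_fuse; [apply nu_comp_l; [exact nf|eapply mk_nuprot; [exact hP| | |apply seteq_refl]]| | | | apply seteq_refl | apply seteq_refl].
    + intro. apply a1. left. auto.
    + intros a [].
    + intro a. rewrite act_comp_nu. apply na.
    + exact b1.
    + unfold minus. tauto.
  - destruct (inv_fuse _ _ _ _ _ _ h1) as (H1 & hP & na & b1 & b2 & e1 & e2).
    exfalso. pose proof (eq_pw _ _ e2 (k, n)) as E. unfold union, single in E.
    assert (e : (k, n) = (Kf, m)) by (apply E; right; apply NN_in1). inversion e. auto.
Qed.

Lemma nu_fuse_r {Pp Pap} n m S (P : sys Pp Pap) G1 G2 T : n <> m -> ~ mem_fn S n ->
  typ_sys G1 G2 (SFuse m S (SNu n P)) T -> typ_sys G1 G2 (SNu n (SFuse m S P)) T.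
Proof.
  intros nm nf h. destruct (inv_fuse _ _ _ _ _ _ h) as (H1 & hnP & na & b1 & b2 & -> & ->).
  apply nu_comp_r in hnP; [|exact nf].
  destruct (inv_nu _ _ _ _ _ hnP) as [(Y & hP & a1 & a2 & ->)|(k & hk & hP & a1 & a2 & a3)].
  - eapply mk_nuprot; [eapply mk_fuse; [exact hP| |exact b1| |apply seteq_refl|apply seteq_refl]| | |apply seteq_refl].
    + intro a. rewrite <- act_comp_nu. apply na.
    + intro. apply b2. split; auto.
    + unfold union, single. intros [h'|h']; auto.
    + unfold single. intros a e. subst. simpl. auto.
  - exfalso. apply (na (k, n)). rewrite act_comp_nu. apply (typ_act _ _ _ _ _ hP). right. apply NN_in1.
Qed.


Lemma swap_iface_same a r : swap_iface a a r = r.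
Proof.
  unfold swap_iface. induction r as [|o r IH]; simpl; auto. rewrite IH.
  destruct o as [[| |y]|]; simpl; auto. rewrite swapn_same. auto.
Qed.
Lemma swap_mem_same {Pap} a (S : mem Pap) : swap_mem a a S = S.
Proof. induction S; simpl; rewrite ?swap_iface_same, ?swapn_same; congruence. Qed.
Lemma swap_sys_same {Pp Pap} a (P : sys Pp Pap) : swap_sys a a P = P.
Proof. induction P; simpl; rewrite ?swap_iface_same, ?swapn_same, ?swap_mem_same; congruence. Qed.

Lemma swapn_b a b : swapn a b b = a.
Proof. unfold swapn. destruct (Nat.eqb_spec b a); auto. rewrite Nat.eqb_refl. auto. Qed.

Lemma sw_fix n m X : ~ X n -> ~ X m -> sw n m X = X.
Proof.
  intros h1 h2. apply ext. intro v. unfold sw.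
  destruct (Nat.eq_dec v n); [subst; rewrite swapn_a; tauto|].
  destruct (Nat.eq_dec v m); [subst; rewrite swapn_b; tauto|].
  rewrite swapn_other; auto. tauto.
Qed.

Lemma swt_fix n m t : (forall a, t a -> snd a <> n) -> (forall a, t a -> snd a <> m) -> swt n m t = t.
Proof.
  intros h1 h2. apply ext. intros [k v]. unfold swt. simpl.
  destruct (Nat.eq_dec v n); [subst; rewrite swapn_a; split; intro h; [exfalso; apply (h2 _ h)|exfalso; apply (h1 _ h)]; reflexivity|].
  destruct (Nat.eq_dec v m); [subst; rewrite swapn_b; split; intro h; [exfalso; apply (h1 _ h)|exfalso; apply (h2 _ h)]; reflexivity|].
  rewrite swapn_other; auto. tauto.
Qed.

Lemma swt_NN n m k : swt n m (NN k n) = NN k m.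
Proof.
  unfold NN. change (swt n m (union (single (k, n)) (single (dual (k, n)))))
    with (union (swt n m (single (k, n))) (swt n m (single (dualk k, n)))).
  rewrite !swt_single, swapn_a. reflexivity.
Qed.

Lemma t_no_n G1 G2 t n k : INV G1 G2 (union t (NN k n)) -> ~ t (k, n) -> ~ t (dual (k, n)) ->
  forall a, t a -> snd a <> n.
Proof.
  intros [_ [_ [_ I4]]] h1 h2 [k' v] ta e. simpl in e. subst.
  destruct (I4 (k', n) (k, n) (dual (k, n))) as [e|[e|e]]; unfold union; auto.
  - right. apply NN_in1.
  - right. apply NN_in2.
  - rewrite <- e in h1. auto.
  - rewrite <- e in h2. auto.
  - apply (dual_neq k n e).
Qed.

Lemma rename {Pp Pap} n m (P : sys Pp Pap) G1 G2 t : ~ sys_fn (SNu n P) m ->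
  typ_sys G1 G2 (SNu n P) t -> typ_sys G1 G2 (SNu m (swap_sys n m P)) t.
Proof.
  intros nf h. destruct (Nat.eq_dec n m) as [<-|nm]; [rewrite swap_sys_same; exact h|].
  assert (nf' : ~ sys_fn P m). { intro. apply nf. simpl. split; auto. }
  destruct (inv_nu _ _ _ _ _ h) as [(G2' & hP & a1 & a2 & ->)|(k & hk & hP & a1 & a2 & a3)].
  - destruct (notfn_sys _ _ _ _ _ hP nf') as (b1 & b2 & b3).
    pose proof (typ_sys_swap n m _ _ _ _ hP) as hs.
    rewrite (sw_fix _ _ _ a1 b1), (swt_fix _ _ _ a2 b3) in hs.
    eapply mk_nuprot; [exact hs|exact b1|exact b3|].
    intro v. unfold sw. destruct (Nat.eq_dec v n); [subst; rewrite swapn_a; tauto|].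
    destruct (Nat.eq_dec v m); [subst; rewrite swapn_b; tauto|].
    rewrite swapn_other; auto. tauto.
  - destruct (notfn_sys _ _ _ _ _ hP nf') as (b1 & b2 & b3).
    destruct (typ_sys_wf _ _ _ _ hP) as [I _].
    pose proof (t_no_n _ _ _ _ _ I a2 a3) as tn.
    assert (G1n : ~ G1 n). { intro. apply (proj1 I n); auto. right. reflexivity. }
    pose proof (typ_sys_swap n m _ _ _ _ hP) as hs.
    rewrite (sw_fix _ _ _ G1n b1) in hs.
    change (sw n m (union G2 (single n))) with (union (sw n m G2) (sw n m (single n))) in hs.
    change (swt n m (union t (NN k n))) with (union (swt n m t) (swt n m (NN k n))) in hs.
    rewrite sw_single, swapn_a, swt_NN, (sw_fix _ _ _ a1 (fun h => b2 (or_introl h))) in hs.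
    rewrite (swt_fix _ _ _ tn (fun a h => b3 a (or_introl h))) in hs.
    eapply mk_nuact; [exact hk|exact hs|apply seteq_refl|apply seteq_refl| | |].
    + intro. apply b2. left. auto.
    + intro h'. apply (b3 _ (or_introl h')). reflexivity.
    + intro h'. apply (b3 _ (or_introl h')). reflexivity.
Qed.

Lemma swapn_inv2 a b x : swapn b a (swapn a b x) = x.
Proof. rewrite swapn_comm. apply swapn_inv. Qed.

Lemma swap_iface_inv2 a b r : swap_iface b a (swap_iface a b r) = r.
Proof.
  unfold swap_iface. induction r as [|o r IH]; simpl; auto. rewrite IH.
  destruct o as [[| |y]|]; simpl; auto. rewrite swapn_inv2. auto.
Qed.
Lemma swap_mem_inv2 {Pap} a b (S : mem Pap) : swap_mem b a (swap_mem a b S) = S.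
Proof. induction S; simpl; rewrite ?swap_iface_inv2, ?swapn_inv2; congruence. Qed.
Lemma swap_sys_inv2 {Pp Pap} a b (P : sys Pp Pap) : swap_sys b a (swap_sys a b P) = P.
Proof. induction P; simpl; rewrite ?swap_iface_inv2, ?swapn_inv2, ?swap_mem_inv2; congruence. Qed.

Lemma rename_iff {Pp Pap} n m (P : sys Pp Pap) G1 G2 t : ~ sys_fn (SNu n P) m ->
  typ_sys G1 G2 (SNu n P) t <-> typ_sys G1 G2 (SNu m (swap_sys n m P)) t.
Proof.
  intros nf. split; [apply rename; auto|].
  intro h. destruct (Nat.eq_dec n m) as [<-|nm]; [rewrite swap_sys_same in h; exact h|].
  apply (rename m n) in h.
  - rewrite swap_sys_inv2 in h. exact h.
  - simpl. rewrite sys_fn_swap. rewrite swapn_a. intros [_ h']. apply nf. simpl. split; auto.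
Qed.


Definition hasact {Pp Pap} (P : sys Pp Pap) := exists a, act_sys P a.

Lemma noact_iff {Pp Pap} (P : sys Pp Pap) : (forall a, ~ act_sys P a) <-> ~ hasact P.
Proof. unfold hasact. firstorder. Qed.

Lemma comp_cong {Pp Pap} S S' (P P' : sys Pp Pap) :
  (forall G1 G2 t, typ_mem G1 G2 S t -> typ_mem G1 G2 S' t) ->
  (forall G1 G2 t, typ_sys G1 G2 P t -> typ_sys G1 G2 P' t) ->
  forall G1 G2 t, typ_sys G1 G2 (SComp S P) t -> typ_sys G1 G2 (SComp S' P') t.
Proof.
  intros hS hP G1 G2 t h.
  destruct (inv_comp _ _ _ _ _ h) as (G & G3 & D2 & t1 & s & h1 & h2 & c1 & c2 & c3 & c4 & c5 & c6 & -> & ->).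
  eapply mk_comp; eauto; apply seteq_refl.
Qed.

Lemma pinch_cong {Pp Pap} n (P P' : sys Pp Pap) :
  (hasact P <-> hasact P') ->
  (forall G1 G2 t, typ_sys G1 G2 P t -> typ_sys G1 G2 P' t) ->
  forall G1 G2 t, typ_sys G1 G2 (SPinch n P) t -> typ_sys G1 G2 (SPinch n P') t.
Proof.
  intros ha hP G1 G2 t h.
  destruct (inv_pinch _ _ _ _ _ h) as (H1 & h1 & na & b1 & b2 & -> & ->).
  eapply mk_pinch; eauto; try apply seteq_refl. rewrite noact_iff in *. tauto.
Qed.

Lemma fuse_cong {Pp Pap} n S S' (P P' : sys Pp Pap) :
  (hasact (SComp S P) <-> hasact (SComp S' P')) ->
  (forall G1 G2 t, typ_sys G1 G2 (SComp S P) t -> typ_sys G1 G2 (SComp S' P') t) ->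
  forall G1 G2 t, typ_sys G1 G2 (SFuse n S P) t -> typ_sys G1 G2 (SFuse n S' P') t.
Proof.
  intros ha hP G1 G2 t h.
  destruct (inv_fuse _ _ _ _ _ _ h) as (H1 & h1 & na & b1 & b2 & -> & ->).
  eapply mk_fuse; eauto; try apply seteq_refl. rewrite noact_iff in *. tauto.
Qed.

Definition R {Pp Pap} (P Q : sys Pp Pap) := (hasact P <-> hasact Q) /\ forall G1 G2 t, typ_sys G1 G2 P t <-> typ_sys G1 G2 Q t.

Lemma R_sym {Pp Pap} (P Q : sys Pp Pap) : R P Q -> R Q P.
Proof. intros [h1 h2]. split; [tauto|]. intros. rewrite h2. tauto. Qed.
Lemma R_trans {Pp Pap} (P Q S : sys Pp Pap) : R P Q -> R Q S -> R P S.
Proof. intros [h1 h2] [h3 h4]. split; [tauto|]. intros. rewrite h2. auto. Qed.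

Lemma alpha_R {Pp Pap} (P Q : sys Pp Pap) : alpha_sys P Q -> R P Q.
Proof.
  induction 1.
  - split; intros; reflexivity.
  - apply R_sym; auto.
  - eapply R_trans; eauto.
  - split.
    + unfold hasact. simpl. split; intros [[k v] h']; [exists (k, swapn n m v); rewrite act_sys_swap; simpl; rewrite swapn_inv; auto|].
      rewrite act_sys_swap in h'. eexists; eauto.
    + intros. apply rename_iff. auto.
  - destruct IHalpha_sys as [h1 h2]. split.
    + unfold hasact in *. simpl. firstorder.
    + intros; split; apply comp_cong; auto; intros; apply h2; auto.
  - destruct IHalpha_sys as [h1 h2]. split.
    + unfold hasact in *. simpl. firstorder.
    + intros; split; apply sys_par_l; intros; apply h2; auto.
  - destruct IHalpha_sys as [h1 h2]. split.
    + unfold hasact in *. simpl. firstorder.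
    + intros; split; apply sys_par_r; intros; apply h2; auto.
  - destruct IHalpha_sys as [h1 h2]. split.
    + unfold hasact in *. simpl. firstorder.
    + intros; split; apply nu_cong; intros; apply h2; auto.
  - destruct IHalpha_sys as [h1 h2]. split.
    + unfold hasact in *. simpl. split; intros; exists (Kp, n); auto.
    + intros; split; apply pinch_cong; try tauto; intros; apply h2; auto.
  - destruct IHalpha_sys as [h1 h2]. split.
    + unfold hasact in *. simpl. split; intros; exists (Kf, n); auto.
    + assert (hc : forall G1 G2 t, typ_sys G1 G2 (SComp S P) t <-> typ_sys G1 G2 (SComp S P') t).
      { intros; split; apply comp_cong; auto; intros; apply h2; auto. }
      assert (ha : hasact (SComp S P) <-> hasact (SComp S P')).
      { unfold hasact in *. simpl. firstorder. }
      intros; split; apply fuse_cong; try tauto; intros; apply hc; auto.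
Qed.

Lemma sequiv_R {Pp Pap} (P Q : sys Pp Pap) : sequiv P Q -> R P Q.
Proof.
  induction 1.
  - split; intros; reflexivity.
  - apply R_sym; auto.
  - eapply R_trans; eauto.
  - apply alpha_R; auto.
  - split; [unfold hasact; simpl; firstorder|]. intros; split; apply sys_comm.
  - split; [unfold hasact; simpl; firstorder|]. intros; split; [apply sys_assoc|apply sys_assoc_rev].
  - split; [unfold hasact; simpl; firstorder|]. intros; apply sys_unit.
  - split; [unfold hasact; simpl; firstorder|]. intros; split; apply nu_nu; auto.
  - split; [unfold hasact; simpl; firstorder|]. intros; apply nu_nil.
  - split; [unfold hasact; simpl; firstorder|]. intros; split; [apply nu_par_l|apply nu_par_r]; auto.
  - split; [unfold hasact; simpl; firstorder|]. intros; split; [apply nu_comp_l|apply nu_comp_r]; auto.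
  - split; [unfold hasact; simpl; split; intros; exists (Kp, m); auto|]. intros; split; [apply nu_pinch_l|apply nu_pinch_r]; auto.
  - split; [unfold hasact; simpl; split; intros; exists (Kf, m); auto|]. intros; split; [apply nu_fuse_l|apply nu_fuse_r]; auto.
  - destruct IHsequiv as [h1 h2]. split.
    + unfold hasact in *. simpl. firstorder.
    + intros; split; apply sys_par_l; intros; apply h2; auto.
  - destruct IHsequiv as [h1 h2]. split.
    + unfold hasact in *. simpl. firstorder.
    + intros; split; apply sys_par_r; intros; apply h2; auto.
  - destruct IHsequiv as [h1 h2]. destruct (mequiv_typ _ _ H) as [m1 m2]. split.
    + unfold hasact in *. simpl. split; intros [a [ha|ha]].
      * exists a. left. apply m1. auto.
      * destruct (proj1 h1 (ex_intro _ a ha)) as [b hb]. exists b. auto.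
      * exists a. left. apply m1. auto.
      * destruct (proj2 h1 (ex_intro _ a ha)) as [b hb]. exists b. auto.
    + intros; split; apply comp_cong; intros; try apply m2; try apply h2; auto.
  - destruct IHsequiv as [h1 h2]. split.
    + unfold hasact in *. simpl. split; intros; exists (Kp, n); auto.
    + intros; split; apply pinch_cong; try tauto; intros; apply h2; auto.
  - destruct IHsequiv as [h1 h2]. split.
    + unfold hasact in *. simpl. split; intros; exists (Kf, n); auto.
    + intros; split; apply fuse_cong; try tauto; intros; apply h2; auto.
Qed.

Theorem mainTheorem4 (Pp Pap : Type) (P Q : sys Pp Pap) (S T : mem Pap) :
  sequiv P Q -> mequiv S T ->
  (forall (G1 G2 : nset) (tau : tset), typ_sys G1 G2 P tau <-> typ_sys G1 G2 Q tau) /\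
  (forall (D1 D2 : nset) (sigma : tset), typ_mem D1 D2 S sigma <-> typ_mem D1 D2 T sigma).
Proof.
  intros h1 h2. split.
  - apply (sequiv_R _ _ h1).
  - apply (mequiv_typ _ _ h2).
Qed.
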